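(* For every $n\in\mathbb N$, the tuple $(\mathbb{T}_{n+1}^-,\iota^n,\kappa^n)$ is a Kruskal derivative of the normal PO-dilator $M\circ\mathbb{T}_n$, where $\iota^n_X:X\to\mathbb{T}_{n+1}^-(X)$ is $\iota^n_X(x)=\overline x$ and $\kappa^n_X:M(\mathbb{T}_n(\mathbb{T}_{n+1}^-(X)))\to\mathbb{T}_{n+1}^-(X)$ is $\kappa^n_X([s_0,\dots,s_{m-1}])=0\star[\pi^n_X(s_0),\dots,\pi^n_X(s_{m-1})]$.
   Context: A quasi embedding between partial orders $X,Y$ is a function $f$ with $f(x)\leq_Y f(y)\Rightarrow x\leq_X y$; an embedding also satisfies the converse. $\mathrm{PO}$ is the category of partial orders and quasi embeddings. $[X]^{<\omega}$ denotes finite subsets, $[f]^{<\omega}(a)=\{f(x)\mid x\in a\}$. A PO-dilator is a functor $W:\mathrm{PO}\to\mathrm{PO}$ mapping embeddings to embeddings, with a natural transformation $\operatorname{supp}^W:W\Rightarrow[\cdot]^{<\omega}$ such that for every embedding $f:X\to Y$, $\operatorname{rng}(W(f))=\{\sigma\in W(Y)\mid\operatorname{supp}^W_Y(\sigma)\subseteq\operatorname{rng}(f)\}$. For finite $a,b\subseteq X$, $a\leq^{\mathrm{fin}}_X b$ iff every $x\in a$ has some $y\in b$ with $x\leq_X y$ ($z\leq^{\mathrm{fin}}_X b$ means $\{z\}\leq^{\mathrm{fin}}_X b$). $W$ is normal if $\sigma\leq_{W(X)}\tau$ implies $\operatorname{supp}^W_X(\sigma)\leq^{\mathrm{fin}}_X\operatorname{supp}^W_X(\tau)$.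 The composition $V\circ W$ of PO-dilators is the composite functor with $\operatorname{supp}^{V\circ W}_X(\sigma)=\bigcup\{\operatorname{supp}^W_X(s)\mid s\in\operatorname{supp}^V_{W(X)}(\sigma)\}$. A Kruskal fixed point of $W$ over $X$ is a partial order $Z$ with $\iota:X\to Z$, $\kappa:W(Z)\to Z$ such that $\operatorname{rng}(\iota)\cap\operatorname{rng}(\kappa)=\emptyset$ and, for all $x,y\in X$, $\sigma,\tau\in W(Z)$: $\iota(x)\leq_Z\iota(y)\Rightarrow x\leq_X y$; $\iota(x)\leq_Z\kappa(\tau)$ iff $\iota(x)\leq^{\mathrm{fin}}_Z\operatorname{supp}^W_Z(\tau)$; $\kappa(\sigma)\not\leq_Z\iota(y)$; $\kappa(\sigma)\leq_Z\kappa(\tau)$ iff ($\sigma\leq_{W(Z)}\tau$ or $\kappa(\sigma)\leq^{\mathrm{fin}}_Z\operatorname{supp}^W_Z(\tau)$). It is initial if for every Kruskal fixed point $(Z',\iota',\kappa')$ of $W$ over $X$ there is a unique quasi embedding $f:Z\to Z'$ with $f\circ\iota=\iota'$ and $f\circ\kappa=\kappa'\circ W(f)$. A Kruskal derivative of a normal PO-dilator $W$ is a tuple $(\mathcal T W,\iota,\kappa)$ with $\mathcal T W$ a normal PO-dilator and families $\iota_X:X\to\mathcal T W(X)$, $\kappa_X:W(\mathcal T W(X))\to\mathcal T W(X)$ such that (i) each $(\mathcal T W(X),\iota_X,\kappa_X)$ is an initial Kruskal fixed point of $W$ over $X$, and (ii) $\iota_Y\circ f=\mathcal T W(f)\circ\iota_X$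 and $\mathcal T W(f)\circ\kappa_X=\kappa_Y\circ W(\mathcal T W(f))$ for every quasi embedding $f:X\to Y$. $M$ is the multiset dilator: $M(X)$ is the set of finite multisets $[x_0,\dots,x_{m-1}]$ over $X$, with $[x_0,\dots,x_{m-1}]\leq_{M(X)}[y_0,\dots,y_{k-1}]$ iff there is an injection $g$ with $x_i\leq_X y_{g(i)}$ for all $i<m$, $M(f)([x_0,\dots])=[f(x_0),\dots]$, $\operatorname{supp}^M_X([x_0,\dots,x_{m-1}])=\{x_0,\dots,x_{m-1}\}$. For $n\in\mathbb N$ and a partial order $X$, $\mathbb{T}_n(X)$ is generated by $\overline x$ ($x\in X$) and $i\star\sigma$ ($\sigma\in M(\mathbb{T}_n(X))$, $i<n$); $\mathbb{T}_n^-(X)=\{\overline x\mid x\in X\}\cup\{0\star\sigma\mid\sigma\in M(\mathbb{T}_n(X))\}$ for $n>0$. The partial order $\leq_{\mathbb{T}_n(X)}$: $\overline x\leq t$ iff either $t=\overline y$ with $x\leq_X y$, or $t=j\star[t_0,\dots,t_{m-1}]$ and $\overline x\leq t_l$ for some $l$; $i\star\sigma\leq t$ iff either $t=i\star\tau$ with $\sigma\leq_{M(\mathbb{T}_n(X))}\tau$, or $t=j\star[t_0,\dots,t_{m-1}]$ with $j\geq i$ and $i\star\sigma\leq t_l$ for some $l$; $\mathbb{T}_n^-(X)$ carries the restricted order. $\mathbb{T}_n(f)(\overline x)=\overline{f(x)}$, $\mathbb{T}_n(f)(i\star[t_0,\dots])=i\star[\mathbb{T}_n(f)(t_0),\dots]$,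 $\mathbb{T}_n^-(f)$ its restriction; $\operatorname{supp}^{\mathbb{T}_n}_X(\overline x)=\{x\}$, $\operatorname{supp}^{\mathbb{T}_n}_X(i\star[t_0,\dots,t_{m-1}])=\bigcup_l\operatorname{supp}^{\mathbb{T}_n}_X(t_l)$, and $\operatorname{supp}^{\mathbb{T}_n^-}_X$ its restriction. With these, $\mathbb{T}_n$ and $\mathbb{T}_{n+1}^-$ are normal PO-dilators. $\pi^n_X:\mathbb{T}_n(\mathbb{T}_{n+1}^-(X))\to\mathbb{T}_{n+1}(X)$ is defined by $\pi^n_X(\overline t)=t$ and $\pi^n_X(i\star[s_0,\dots,s_{m-1}])=(i+1)\star[\pi^n_X(s_0),\dots,\pi^n_X(s_{m-1})]$. *)

(* Defs.v *)
From Stdlib Require Import List Permutation Arith ClassicalEpsilon.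
Import ListNotations.

Record PreO : Type := mkPreO { car :> Type; ple : car -> car -> Prop }.

Definition is_po (X : PreO) : Prop :=
  (forall x : X, ple X x x) /\
  (forall x y z : X, ple X x y -> ple X y z -> ple X x z) /\
  (forall x y : X, ple X x y -> ple X y x -> x = y).

Definition quasi_emb (X Y : PreO) (f : X -> Y) : Prop :=
  forall x y : X, ple Y (f x) (f y) -> ple X x y.

Definition embedding (X Y : PreO) (f : X -> Y) : Prop :=
  forall x y : X, ple Y (f x) (f y) <-> ple X x y.

(* finite subsets of X are represented by lists, only ever used through
   membership [In]; a <=fin b *)
Definition fin_le (X : PreO) (a b : list X) : Prop :=
  forall x, In x a -> exists y, In y b /\ ple X x y.

Record Dil : Type := mkDil {
  dobj : PreO -> PreO;
  dmap : forall X Y : PreO, (X -> Y) -> dobj X -> dobj Y;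
  dsupp : forall X : PreO, dobj X -> list X }.

Arguments dmap d {X Y} f _.
Arguments dsupp d {X} _.

Definition is_PO_dilator (W : Dil) : Prop :=
  (forall X : PreO, is_po X -> is_po (dobj W X)) /\
  (forall (X Y : PreO) (f : X -> Y), is_po X -> is_po Y ->
     quasi_emb X Y f -> quasi_emb (dobj W X) (dobj W Y) (dmap W f)) /\
  (forall X : PreO, is_po X -> forall s : dobj W X, dmap W (fun x : X => x) s = s) /\
  (forall (X Y Z : PreO) (f : X -> Y) (g : Y -> Z), is_po X -> is_po Y -> is_po Z ->
     quasi_emb X Y f -> quasi_emb Y Z g ->
     forall s : dobj W X, dmap W (fun x => g (f x)) s = dmap W g (dmap W f s)) /\
  (forall (X Y : PreO) (f : X -> Y), is_po X -> is_po Y ->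
     embedding X Y f -> embedding (dobj W X) (dobj W Y) (dmap W f)) /\
  (forall (X Y : PreO) (f : X -> Y), is_po X -> is_po Y -> quasi_emb X Y f ->
     forall (s : dobj W X) (y : Y),
       In y (dsupp W (dmap W f s)) <-> exists x, In x (dsupp W s) /\ f x = y) /\
  (forall (X Y : PreO) (f : X -> Y), is_po X -> is_po Y -> embedding X Y f ->
     forall s : dobj W Y,
       (exists t : dobj W X, dmap W f t = s) <->
       (forall y, In y (dsupp W s) -> exists x, f x = y)).

Definition is_normal_dilator (W : Dil) : Prop :=
  is_PO_dilator W /\
  (forall X : PreO, is_po X -> forall s t : dobj W X,
     ple (dobj W X) s t -> fin_le X (dsupp W s) (dsupp W t)).

Definition compose (V W : Dil) : Dil :=
  mkDil (fun X => dobj V (dobj W X))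
        (fun X Y f => dmap V (dmap W f))
        (fun X s => flat_map (fun r => dsupp W r) (dsupp V s)).

Definition kruskal_fp (W : Dil) (X Z : PreO) (iota : X -> Z)
  (kappa : dobj W Z -> Z) : Prop :=
  is_po Z /\
  (forall (x : X) (s : dobj W Z), iota x <> kappa s) /\
  (forall x y : X, ple Z (iota x) (iota y) -> ple X x y) /\
  (forall (x : X) (t : dobj W Z),
     ple Z (iota x) (kappa t) <-> fin_le Z [iota x] (dsupp W t)) /\
  (forall (s : dobj W Z) (y : X), ~ ple Z (kappa s) (iota y)) /\
  (forall s t : dobj W Z,
     ple Z (kappa s) (kappa t) <->
     (ple (dobj W Z) s t \/ fin_le Z [kappa s] (dsupp W t))).

Definition initial_kfp (W : Dil) (X Z : PreO) (iota : X -> Z)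
  (kappa : dobj W Z -> Z) : Prop :=
  kruskal_fp W X Z iota kappa /\
  forall (Z' : PreO) (iota' : X -> Z') (kappa' : dobj W Z' -> Z'),
    kruskal_fp W X Z' iota' kappa' ->
    exists f : Z -> Z',
      (quasi_emb Z Z' f /\ (forall x, f (iota x) = iota' x) /\
       (forall s, f (kappa s) = kappa' (dmap W f s))) /\
      (forall g : Z -> Z',
         quasi_emb Z Z' g -> (forall x, g (iota x) = iota' x) ->
         (forall s, g (kappa s) = kappa' (dmap W g s)) ->
         forall z, g z = f z).

Definition kruskal_derivative (W TW : Dil)
  (iota : forall X : PreO, X -> dobj TW X)
  (kappa : forall X : PreO, dobj W (dobj TW X) -> dobj TW X) : Prop :=
  is_normal_dilator TW /\
  (forall X : PreO, is_po X -> initial_kfp W X (dobj TW X) (iota X) (kappa X)) /\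
  (forall (X Y : PreO) (f : X -> Y), is_po X -> is_po Y -> quasi_emb X Y f ->
     (forall x, iota Y (f x) = dmap TW f (iota X x)) /\
     (forall s, dmap TW f (kappa X s) = kappa Y (dmap W (dmap TW f) s))).

Definition quot (A : Type) (R : A -> A -> Prop) : Type :=
  { P : A -> Prop | exists a, P = R a }.

Definition cls {A : Type} (R : A -> A -> Prop) (a : A) : quot A R :=
  exist _ (R a) (ex_intro _ a eq_refl).

Definition rep {A : Type} {R : A -> A -> Prop} (q : quot A R) : A :=
  proj1_sig (constructive_indefinite_description _ (proj2_sig q)).

Definition ms_le {A B : Type} (R : A -> B -> Prop) (l : list A) (k : list B) : Prop :=
  exists g : nat -> nat,
    (forall i j, i < length l -> j < length l -> g i = g j -> i = j) /\
    (forall i a, nth_error l i = Some a ->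
       exists b, nth_error k (g i) = Some b /\ R a b).

Definition Mobj (X : PreO) : PreO :=
  mkPreO (quot (list X) (@Permutation X))
         (fun s t => ms_le (ple X) (rep s) (rep t)).

Definition Mdil : Dil :=
  mkDil Mobj
        (fun X Y f s => cls (@Permutation Y) (map f (rep s)))
        (fun X s => rep s).

Definition lbl (n : nat) : Type := { i : nat | i < n }.
Definition lblv {n : nat} (i : lbl n) : nat := proj1_sig i.

(* raw trees: leaves x (written \bar x) and nodes i * [t_0,...,t_{m-1}] *)
Inductive rtree (L A : Type) : Type :=
| Leaf (x : A)
| Node (i : L) (ts : list (rtree L A)).
Arguments Leaf {L A} x.
Arguments Node {L A} i ts.

(* equality of trees whose children form multisets *)
Inductive teq (L A : Type) : rtree L A -> rtree L A -> Prop :=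
| teq_leaf (x : A) : teq L A (Leaf x) (Leaf x)
| teq_node (i : L) (ts ss us : list (rtree L A)) :
    Forall2 (teq L A) ts ss -> Permutation ss us -> teq L A (Node i ts) (Node i us).

Inductive tle (L : Type) (lv : L -> nat) (X : PreO) : rtree L X -> rtree L X -> Prop :=
| tle_LL (x y : X) : ple X x y -> tle L lv X (Leaf x) (Leaf y)
| tle_LN (x : X) (j : L) (ts : list (rtree L X)) (t : rtree L X) :
    In t ts -> tle L lv X (Leaf x) t -> tle L lv X (Leaf x) (Node j ts)
| tle_NN (i : L) (ss ts : list (rtree L X)) :
    ms_le (tle L lv X) ss ts -> tle L lv X (Node i ss) (Node i ts)
| tle_NN' (i : L) (ss : list (rtree L X)) (j : L) (ts : list (rtree L X)) (t : rtree L X) :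
    lv i <= lv j -> In t ts -> tle L lv X (Node i ss) t ->
    tle L lv X (Node i ss) (Node j ts).

Fixpoint rmap {L A B : Type} (f : A -> B) (t : rtree L A) : rtree L B :=
  match t with
  | Leaf x => Leaf (f x)
  | Node i ts => Node i (map (rmap f) ts)
  end.

Fixpoint rsupp {L A : Type} (t : rtree L A) : list A :=
  match t with
  | Leaf x => [x]
  | Node _ ts => flat_map rsupp ts
  end.

Definition Tobj (n : nat) (X : PreO) : PreO :=
  mkPreO (quot (rtree (lbl n) X) (teq (lbl n) X))
         (fun s t => tle (lbl n) lblv X (rep s) (rep t)).

Definition Tdil (n : nat) : Dil :=
  mkDil (Tobj n)
        (fun X Y f s => cls (teq (lbl n) Y) (rmap f (rep s)))
        (fun X s => rsupp (rep s)).

(* T_{n+1}^- : elements \bar x or 0 * sigma with sigma in M(T_{n+1}(X)) *)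
Inductive mtree (n : nat) (A : Type) : Type :=
| MLeaf (x : A)
| MNode (ts : list (rtree (lbl (S n)) A)).
Arguments MLeaf {n A} x.
Arguments MNode {n A} ts.

Definition lbl0 (n : nat) : lbl (S n) := exist _ 0 (Nat.lt_0_succ n).

(* inclusion of T_{n+1}^-(X) into T_{n+1}(X) on raw trees *)
Definition memb {n : nat} {A : Type} (m : mtree n A) : rtree (lbl (S n)) A :=
  match m with
  | MLeaf x => Leaf x
  | MNode ts => Node (lbl0 n) ts
  end.

Definition meq (n : nat) (A : Type) (a b : mtree n A) : Prop :=
  teq (lbl (S n)) A (memb a) (memb b).

Definition Tmobj (n : nat) (X : PreO) : PreO :=
  mkPreO (quot (mtree n X) (meq n X))
         (fun s t => tle (lbl (S n)) lblv X (memb (rep s)) (memb (rep t))).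

Definition mmap {n : nat} {A B : Type} (f : A -> B) (m : mtree n A) : mtree n B :=
  match m with
  | MLeaf x => MLeaf (f x)
  | MNode ts => MNode (map (rmap f) ts)
  end.

Definition Tmdil (n : nat) : Dil :=
  mkDil (Tmobj n)
        (fun X Y f s => cls (meq n Y) (mmap f (rep s)))
        (fun X s => rsupp (memb (rep s))).

Definition lsucc {n : nat} (i : lbl n) : lbl (S n) :=
  exist _ (S (proj1_sig i)) (proj1 (Nat.succ_lt_mono _ _) (proj2_sig i)).

Fixpoint rpi {n : nat} {X : PreO} (t : rtree (lbl n) (Tmobj n X)) : rtree (lbl (S n)) X :=
  match t with
  | Leaf m => memb (rep m)
  | Node i ts => Node (lsucc i) (map rpi ts)
  end.

Definition pi (n : nat) (X : PreO) (c : Tobj n (Tmobj n X)) : Tobj (S n) X :=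
  cls (teq (lbl (S n)) X) (rpi (rep c)).

Definition iota_n (n : nat) (X : PreO) (x : X) : dobj (Tmdil n) X :=
  cls (meq n X) (MLeaf x).

Definition kappa_n (n : nat) (X : PreO)
  (s : dobj (compose Mdil (Tdil n)) (dobj (Tmdil n) X)) : dobj (Tmdil n) X :=
  cls (meq n X) (MNode (map (fun t => rep (pi n X t)) (rep s))).

(* Main.v *)
Require Import Defs.
From Stdlib Require Import List Permutation Arith Lia ClassicalEpsilon Classical FunctionalExtensionality PropExtensionality ProofIrrelevance Setoid Morphisms.
Import ListNotations.

Lemma sig_eq {T} (Q : T -> Prop) (x y : sig Q) : proj1_sig x = proj1_sig y -> x = y.
Proof. destruct x, y; simpl; intros ->; f_equal; apply proof_irrelevance. Qed.
Section Quot.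
Context {A : Type} (R : A -> A -> Prop).
Hypothesis Rrefl : forall a, R a a.
Hypothesis Rsym : forall a b, R a b -> R b a.
Hypothesis Rtrans : forall a b c, R a b -> R b c -> R a c.

Lemma rep_spec (q : quot A R) : proj1_sig q = R (rep q).
Proof.
  unfold rep. destruct (constructive_indefinite_description _ _) as [a Ha]. simpl. exact Ha.
Qed.

Lemma rep_cls (a : A) : R a (rep (cls R a)).
Proof.
  pose proof (rep_spec (cls R a)) as H. simpl in H. rewrite H. apply Rrefl.
Qed.

Lemma cls_rep (q : quot A R) : cls R (rep q) = q.
Proof.
  apply sig_eq. simpl. symmetry. apply rep_spec.
Qed.

Lemma cls_eq (a b : A) : R a b -> cls R a = cls R b.
Proof.
  intro H. apply sig_eq. simpl.
  apply functional_extensionality; intro x; apply propositional_extensionality; split; intro;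
    eauto.
Qed.

Lemma cls_inj (a b : A) : cls R a = cls R b -> R a b.
Proof.
  intro H. apply (f_equal (@proj1_sig _ _)) in H. simpl in H. rewrite H. apply Rrefl.
Qed.

Lemma rep_cls' (a : A) : R (rep (cls R a)) a.
Proof. apply Rsym, rep_cls. Qed.
End Quot.

Fixpoint msi {A B : Type} (R : A -> B -> Prop) (l : list A) (k : list B) : Prop :=
  match l with
  | [] => True
  | a :: l' => exists b k', Permutation k (b :: k') /\ R a b /\ msi R l' k'
  end.

Section MS.
Context {A B : Type}.

Lemma msi_perm_r (R : A -> B -> Prop) l k k2 : Permutation k k2 -> msi R l k -> msi R l k2.
Proof.
  destruct l; simpl; auto. intros P [b [k' [H1 [H2 H3]]]].
  exists b, k'. repeat split; auto. eapply perm_trans; [apply Permutation_sym, P| exact H1].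
Qed.

Lemma msi_perm_l (R : A -> B -> Prop) l l2 k : Permutation l l2 -> msi R l k -> msi R l2 k.
Proof.
  intro P. revert k. induction P; intros k H; simpl in *; auto.
  - destruct H as [b [k' [H1 [H2 H3]]]]. exists b, k'. auto.
  - destruct H as [b [k' [H1 [H2 [c [k'' [H3 [H4 H5]]]]]]]].
    exists c, (b :: k''). split; [|split; auto].
    + eapply perm_trans; [exact H1|]. eapply perm_trans; [apply perm_skip; exact H3|]. apply perm_swap.
    + exists b, k''. auto.
Qed.

Lemma msi_mono (R S : A -> B -> Prop) l k :
  (forall a b, In a l -> In b k -> R a b -> S a b) -> msi R l k -> msi S l k.
Proof.
  revert k; induction l as [|a l IH]; intros k HS H; simpl in *; auto.
  destruct H as [b [k' [H1 [H2 H3]]]]. exists b, k'. repeat split; auto.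
  - apply HS; auto. apply Permutation_in with (b :: k'); [apply Permutation_sym; auto| left; auto].
  - apply IH; auto. intros. apply HS; auto.
    apply Permutation_in with (b :: k'); [apply Permutation_sym; auto| right; auto].
Qed.

Lemma msi_in (R : A -> B -> Prop) l k a : msi R l k -> In a l -> exists b, In b k /\ R a b.
Proof.
  revert k; induction l as [|a' l IH]; intros k H Hin; simpl in *; [contradiction|].
  destruct H as [b [k' [H1 [H2 H3]]]]. destruct Hin as [<-|Hin].
  - exists b. split; auto. apply Permutation_in with (b :: k'); [apply Permutation_sym; auto| left; auto].
  - destruct (IH k' H3 Hin) as [c [Hc1 Hc2]]. exists c. split; auto.
    apply Permutation_in with (b :: k'); [apply Permutation_sym; auto| right; auto].
Qed.

Lemma msi_length (R : A -> B -> Prop) l k : msi R l k -> length l <= length k.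
Proof.
  revert k; induction l as [|a l IH]; intros k H; simpl in *; [lia|].
  destruct H as [b [k' [H1 [H2 H3]]]]. apply Permutation_length in H1. simpl in H1.
  specialize (IH _ H3). lia.
Qed.

Lemma msi_F2 (R : A -> B -> Prop) l k : Forall2 R l k -> msi R l k.
Proof.
  induction 1; simpl; auto. exists y, l'. auto.
Qed.

Lemma msi_map_l {C} (R : A -> B -> Prop) (f : C -> A) l k :
  msi R (map f l) k <-> msi (fun a b => R (f a) b) l k.
Proof.
  revert k; induction l as [|a l IH]; intros k; simpl; [tauto|].
  split; intros [b [k' [H1 [H2 H3]]]]; exists b, k'; repeat split; auto; apply IH; auto.
Qed.

Lemma msi_map_r {C} (R : A -> B -> Prop) (g : C -> B) l k :
  msi R l (map g k) <-> msi (fun a b => R a (g b)) l k.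
Proof.
  revert k; induction l as [|a l IH]; intros k; simpl; [tauto|].
  split.
  - intros [b [k' [H1 [H2 H3]]]].
    destruct (Permutation_map_inv _ _ (Permutation_sym H1)) as [k3 [E P]].
    destruct k3 as [|b0 k3]; simpl in E; [discriminate|]. injection E as -> ->.
    exists b0, k3. split; [exact P|split; [exact H2| apply IH; exact H3]].
  - intros [b [k' [H1 [H2 H3]]]]. exists (g b), (map g k'). split; [apply (Permutation_map g H1)|split; [exact H2|apply IH; exact H3]].
Qed.
End MS.

Lemma msi_refl {A} (R : A -> A -> Prop) l : (forall a, In a l -> R a a) -> msi R l l.
Proof.
  intro H. apply msi_F2. induction l; constructor; auto. apply H; left; auto.
  apply IHl; intros; apply H; right; auto.
Qed.

Lemma msi_trans {A B C} (R : A -> B -> Prop) (S : B -> C -> Prop) (T : A -> C -> Prop) l k m :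
  (forall a b c, In a l -> In b k -> In c m -> R a b -> S b c -> T a c) ->
  msi R l k -> msi S k m -> msi T l m.
Proof.
  revert k m; induction l as [|a l IH]; intros k m HT H1 H2; simpl in *; auto.
  destruct H1 as [b [k' [P1 [Rab H1]]]].
  apply (msi_perm_l _ _ _ _ P1) in H2. simpl in H2.
  destruct H2 as [c [m' [P2 [Sbc H2]]]].
  exists c, m'. repeat split; auto.
  - apply HT with b; auto.
    apply Permutation_in with (b :: k'); [apply Permutation_sym; auto| left; auto].
    apply Permutation_in with (c :: m'); [apply Permutation_sym; auto| left; auto].
  - apply IH with k'; auto. intros. apply HT with b0; auto.
    apply Permutation_in with (b :: k'); [apply Permutation_sym; auto| right; auto].
    apply Permutation_in with (c :: m'); [apply Permutation_sym; auto| right; auto].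
Qed.

Lemma perm_cons_cases {A} (a a' : A) l1 l2 : Permutation (a :: l1) (a' :: l2) ->
  (a = a' /\ Permutation l1 l2) \/
  exists C, Permutation l1 (a' :: C) /\ Permutation l2 (a :: C).
Proof.
  intro P. assert (In a (a' :: l2)) as [E|Hin].
  { apply Permutation_in with (a :: l1); auto. left; auto. }
  - subst. left. split; auto. eapply Permutation_cons_inv; eauto.
  - right. apply in_split in Hin. destruct Hin as [p [q ->]].
    exists (p ++ q). split.
    + apply Permutation_cons_inv with a. eapply perm_trans; [exact P|].
      eapply perm_trans; [apply perm_skip, Permutation_sym, Permutation_middle|]. apply perm_swap.
    + apply Permutation_sym, Permutation_middle.
Qed.

Lemma msi_replace {A B} (R : A -> B -> Prop) l a a' C :
  (forall x, R x a -> R x a') -> msi R l (a :: C) -> msi R l (a' :: C).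
Proof.
  intro Hr. revert C; induction l as [|x l IH]; intros C H; simpl in *; auto.
  destruct H as [b [k' [P [Rxb H]]]].
  apply perm_cons_cases in P. destruct P as [[-> P]|[D [P1 P2]]].
  - exists a', k'. repeat split; auto.
  - exists b, (a' :: D). repeat split; auto.
    + eapply perm_trans; [apply perm_skip, P1|]. apply perm_swap.
    + apply IH. eapply msi_perm_r; [exact P2|]. exact H.
Qed.

Lemma max_ex {A} (R : A -> A -> Prop) (Rt : forall a b c, R a b -> R b c -> R a c) l :
  l <> [] -> exists a l', Permutation l (a :: l') /\ forall a', In a' l -> R a a' -> R a' a.
Proof.
  induction l as [|x l IH]; intro Hne; [congruence|].
  destruct l as [|y l].
  - exists x, []. split; auto. intros a' [<-|[]]; auto.
  - destruct IH as [m [l' [P Hm]]]; [congruence|].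
    destruct (classic (R m x)) as [Hmx|Hmx].
    + exists x, (y :: l). split; auto. intros a' [<-|Hin] H; auto.
      apply Rt with m; auto. apply Hm; auto. apply Rt with x; auto.
    + exists m, (x :: l'). split.
      * eapply perm_trans; [apply perm_skip, P|]. apply perm_swap.
      * intros a' [<-|Hin] H; [contradiction|]. apply Hm; auto.
Qed.

Lemma msi_antisym {A} (R E : A -> A -> Prop) (Rt : forall a b c, R a b -> R b c -> R a c) :
  forall l k, (forall a b, In a l -> In b k -> R a b -> R b a -> E a b) ->
  msi R l k -> msi R k l -> exists k', Forall2 E l k' /\ Permutation k' k.
Proof.
  intros l. remember (length l) as N. revert l HeqN.
  induction N as [N IHN] using lt_wf_ind. intros l HN k HE H1 H2.
  destruct l as [|a0 l0].
  - destruct k; [|apply msi_length in H2; simpl in H2; lia]. exists []; auto.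
  - destruct (max_ex R Rt (a0 :: l0)) as [a [l' [P Hm]]]; [congruence|].
    set (l := a0 :: l0) in *.
    apply (msi_perm_l _ _ _ _ P) in H1. simpl in H1. destruct H1 as [b [k' [Pk [Rab H1]]]].
    apply (msi_perm_l _ _ _ _ Pk) in H2. apply (msi_perm_r _ _ _ _ P) in H2. simpl in H2.
    destruct H2 as [a' [l'' [Pl [Rba' H2]]]].
    assert (Inl : forall x, In x l' -> In x l).
    { intros x Hx. apply Permutation_in with (a :: l'); [apply Permutation_sym; auto| right; auto]. }
    assert (Ink : forall x, In x k' -> In x k).
    { intros x Hx. apply Permutation_in with (b :: k'); [apply Permutation_sym; auto| right; auto]. }
    assert (Ina : In a l). { apply Permutation_in with (a :: l'); [apply Permutation_sym; auto| left; auto]. }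
    assert (Inb : In b k). { apply Permutation_in with (b :: k'); [apply Permutation_sym; auto| left; auto]. }
    assert (Raa' : R a a') by (apply Rt with b; auto).
    assert (Ina' : In a' l). { apply Permutation_in with (a :: l'); [apply Permutation_sym; auto|].
      apply Permutation_in with (a' :: l''); [apply Permutation_sym; auto| left; auto]. }
    assert (Rba : R b a) by (apply Rt with a'; auto).
    assert (H3 : msi R k' l').
    { apply perm_cons_cases in Pl. destruct Pl as [[_ Pl]|[C [P1 P2]]].
      - eapply msi_perm_r; [apply Permutation_sym, Pl|]. auto.
      - eapply msi_perm_r; [apply Permutation_sym, P1|]. apply msi_replace with a.
        + intros x Hx. apply Rt with a; auto.
        + eapply msi_perm_r; [exact P2|]. auto. }
    assert (Hlen : length l' < N).
    { apply Permutation_length in P. simpl in P. subst l N. simpl in *. lia. }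
    destruct (IHN _ Hlen l' eq_refl k') as [k'' [F P']]; auto.
    assert (F2 : Forall2 E (a :: l') (b :: k'')) by (constructor; auto).
    destruct (Permutation_Forall2 (Permutation_sym P) F2) as [l2 [Pl2 Fl2]].
    exists l2. split; auto. eapply perm_trans; [apply Permutation_sym, Pl2|].
    eapply perm_trans; [apply perm_skip, P'|]. apply Permutation_sym; auto.
Qed.

Lemma nth_error_remove {A} (k1 k2 : list A) b j : j <> length k1 ->
  nth_error (k1 ++ b :: k2) j = nth_error (k1 ++ k2) (if j <? length k1 then j else j - 1).
Proof.
  intro H. destruct (Nat.ltb_spec j (length k1)).
  - rewrite !nth_error_app1; auto.
  - rewrite !nth_error_app2 by lia. replace (j - length k1) with (S (j - 1 - length k1)) by lia.
    reflexivity.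
Qed.

Lemma ms_le_msi {A B} (R : A -> B -> Prop) l k : ms_le R l k <-> msi R l k.
Proof.
  split.
  - revert k; induction l as [|a l IH]; intros k [g [Hinj Hn]]; simpl; auto.
    destruct (Hn 0 a eq_refl) as [b [Hb Rab]].
    destruct (nth_error_split _ _ Hb) as [k1 [k2 [-> Hl]]].
    exists b, (k1 ++ k2). split; [apply Permutation_sym, Permutation_middle|]. split; auto.
    apply IH. exists (fun i => if g (S i) <? g 0 then g (S i) else g (S i) - 1). split.
    + intros i j Hi Hj E.
      assert (Ni : g (S i) <> g 0) by (intro C; apply Hinj in C; simpl; lia).
      assert (Nj : g (S j) <> g 0) by (intro C; apply Hinj in C; simpl; lia).
      assert (g (S i) = g (S j)) as C.
      { destruct (Nat.ltb_spec (g (S i)) (g 0)), (Nat.ltb_spec (g (S j)) (g 0)); lia. }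
      apply Hinj in C; simpl; lia.
    + intros i a' Ha'. destruct (Hn (S i) a' Ha') as [b' [Hb' Rb']]. exists b'. split; auto.
      assert (Ni : g (S i) <> g 0).
      { intro C. assert (i < length l) by (apply nth_error_Some; congruence). apply Hinj in C; simpl; lia. }
      rewrite nth_error_remove in Hb' by lia. rewrite Hl in Hb'. exact Hb'.
  - revert k; induction l as [|a l IH]; intros k H; simpl in *.
    + exists (fun i => i). split; auto. intros i a' Hi. destruct i; discriminate.
    + destruct H as [b [k' [P [Rab H]]]]. destruct (IH _ H) as [g [Hinj Hn]].
      destruct (proj1 (Permutation_nth_error _ _) P) as [_ [f [Finj Hf]]].
      exists (fun i => f (match i with 0 => 0 | S i => S (g i) end)). split.
      * intros i j Hi Hj E. apply Finj in E. destruct i, j; simpl in *; try lia; try discriminate.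
        injection E as E. apply Hinj in E; lia.
      * intros i a' Ha'. rewrite <- Hf. destruct i; simpl in *.
        -- injection Ha' as <-. exists b; auto.
        -- apply Hn; auto.
Qed.

Fixpoint rsize {L A} (t : rtree L A) : nat :=
  match t with Leaf _ => 1 | Node _ ts => S (list_sum (map rsize ts)) end.

Lemma rsize_pos {L A} (t : rtree L A) : 1 <= rsize t.
Proof. destruct t; simpl; lia. Qed.

Lemma list_sum_in {A} (f : A -> nat) l a : In a l -> f a <= list_sum (map f l).
Proof. induction l; simpl; intros []; subst; try lia. specialize (IHl H); lia. Qed.

Lemma rsize_in {L A} (i : L) (t : rtree L A) ts : In t ts -> rsize t < rsize (Node i ts).
Proof. intro H. simpl. pose proof (list_sum_in rsize ts t H). lia. Qed.

Fixpoint rtree_ind' {L A} (P : rtree L A -> Prop) (HL : forall x, P (Leaf x))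
  (HN : forall i ts, Forall P ts -> P (Node i ts)) (t : rtree L A) : P t :=
  match t with
  | Leaf x => HL x
  | Node i ts => HN i ts ((fix F (l : list (rtree L A)) : Forall P l :=
        match l with [] => Forall_nil _ | u :: l' => Forall_cons _ (rtree_ind' P HL HN u) (F l') end) ts)
  end.

Lemma Forall2_mono_F {A B} (P : A -> Prop) (R S : A -> B -> Prop) l k :
  Forall P l -> Forall2 R l k -> (forall a b, P a -> R a b -> S a b) -> Forall2 S l k.
Proof. intros HP HR H. induction HR; inversion HP; subst; constructor; auto. Qed.

Lemma Forall2_flip {A B} (R : A -> B -> Prop) l k : Forall2 R l k -> Forall2 (fun b a => R a b) k l.
Proof. induction 1; constructor; auto. Qed.

Lemma Forall2_trans_F {A B C} (P : A -> Prop) (R : A -> B -> Prop) (S : B -> C -> Prop)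
  (T : A -> C -> Prop) l k m :
  Forall P l -> Forall2 R l k -> Forall2 S k m ->
  (forall a b c, P a -> R a b -> S b c -> T a c) -> Forall2 T l m.
Proof.
  intros HP HR. revert m. induction HR; intros m HS HH; inversion HP; subst; inversion HS; subst;
  constructor; eauto.
Qed.

Lemma Forall2_in_l {A B} (R : A -> B -> Prop) l k a : Forall2 R l k -> In a l -> exists b, In b k /\ R a b.
Proof. induction 1; simpl; intros []; subst; eauto. destruct (IHForall2 H1) as [b [? ?]]; eauto. Qed.

Lemma Forall2_in_r {A B} (R : A -> B -> Prop) l k b : Forall2 R l k -> In b k -> exists a, In a l /\ R a b.
Proof. induction 1; simpl; intros []; subst; eauto. destruct (IHForall2 H1) as [a [? ?]]; eauto. Qed.

Lemma Forall_forall_in {A} (P : A -> Prop) l : (forall a, In a l -> P a) -> Forall P l.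
Proof. apply Forall_forall. Qed.

Lemma Forall2_refl_in {A} (R : A -> A -> Prop) l : (forall a, In a l -> R a a) -> Forall2 R l l.
Proof. induction l; constructor; simpl in *; auto. Qed.

Lemma Forall2_map_both {A B C D} (f : A -> C) (g : B -> D) (R : C -> D -> Prop) l k :
  Forall2 (fun a b => R (f a) (g b)) l k -> Forall2 R (map f l) (map g k).
Proof. induction 1; simpl; constructor; auto. Qed.

Section Teq.
Context {L A : Type}.
Notation teq := (teq L A).

Lemma teq_leaf_inv (x : A) b : teq (Leaf x) b -> b = Leaf x.
Proof. intro H; inversion H; auto. Qed.
Lemma teq_leaf_inv' (x : A) b : teq b (Leaf x) -> b = Leaf x.
Proof. intro H; inversion H; auto. Qed.

Lemma teq_node_inv (i : L) ts b : teq (Node i ts) b ->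
  exists ss us, b = Node i us /\ Forall2 teq ts ss /\ Permutation ss us.
Proof. intro H; inversion H; subst; eauto. Qed.

Lemma teq_refl (t : rtree L A) : teq t t.
Proof.
  induction t using rtree_ind'; [constructor|].
  apply teq_node with ts; auto. induction H; constructor; auto.
Qed.

Lemma teq_sym (a b : rtree L A) : teq a b -> teq b a.
Proof.
  revert b; induction a as [x|i ts IH] using rtree_ind'; intros b H.
  - apply teq_leaf_inv in H; subst; constructor.
  - apply teq_node_inv in H. destruct H as [ss [us [-> [F P]]]].
    assert (F' : Forall2 (fun s t => teq s t) ss ts).
    { apply Forall2_flip. eapply Forall2_mono_F; eauto. }
    destruct (Permutation_Forall2 P F') as [ts' [P' F'']].
    apply teq_node with ts'; auto. apply Permutation_sym; auto.
Qed.

Lemma teq_trans (a b c : rtree L A) : teq a b -> teq b c -> teq a c.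
Proof.
  revert b c; induction a as [x|i ts IH] using rtree_ind'; intros b c H1 H2.
  - apply teq_leaf_inv in H1; subst. auto.
  - apply teq_node_inv in H1. destruct H1 as [ss [us [-> [F P]]]].
    apply teq_node_inv in H2. destruct H2 as [vs [ws [-> [F2 P2]]]].
    destruct (Permutation_Forall2 (Permutation_sym P) F2) as [vs' [P' F']].
    apply teq_node with vs'.
    + eapply Forall2_trans_F; eauto.
    + eapply perm_trans; [apply Permutation_sym, P'|]. auto.
Qed.

Lemma teq_node_perm (i : L) ts us : Permutation ts us -> teq (Node i ts) (Node i us).
Proof. intro P. apply teq_node with ts; auto. apply Forall2_refl_in. intros; apply teq_refl. Qed.

Lemma teq_node_F2 (i : L) ts us : Forall2 teq ts us -> teq (Node i ts) (Node i us).
Proof. intro P. apply teq_node with us; auto. Qed.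

Lemma rsize_teq (a b : rtree L A) : teq a b -> rsize a = rsize b.
Proof.
  revert b; induction a as [x|i ts IH] using rtree_ind'; intros b H.
  - apply teq_leaf_inv in H; subst; auto.
  - apply teq_node_inv in H. destruct H as [ss [us [-> [F P]]]]. simpl. f_equal.
    transitivity (list_sum (map rsize ss)).
    + f_equal. clear P. induction F; simpl; auto. inversion IH; subst. f_equal; auto.
    + apply Permutation_list_sum. apply Permutation_map; auto.
Qed.

Lemma rsupp_teq (a b : rtree L A) : teq a b -> forall x, In x (rsupp a) <-> In x (rsupp b).
Proof.
  revert b; induction a as [x|i ts IH] using rtree_ind'; intros b H y.
  - apply teq_leaf_inv in H; subst; tauto.
  - apply teq_node_inv in H. destruct H as [ss [us [-> [F P]]]]. simpl.
    rewrite !in_flat_map. split.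
    + intros [t [Ht Hy]]. destruct (Forall2_in_l _ _ _ _ F Ht) as [s [Hs Ts]].
      exists s. split; [apply Permutation_in with ss; auto|].
      rewrite Forall_forall in IH. apply (IH t Ht s Ts); auto.
    + intros [u [Hu Hy]]. apply (Permutation_in (l:=us) (l':=ss)) in Hu; [|apply Permutation_sym; auto].
      destruct (Forall2_in_r _ _ _ _ F Hu) as [t [Ht Ts]].
      exists t. split; auto. rewrite Forall_forall in IH. apply (IH t Ht u Ts); auto.
Qed.
End Teq.

Lemma size_ind {L A} (P : rtree L A -> Prop) :
  (forall t, (forall t', rsize t' < rsize t -> P t') -> P t) -> forall t, P t.
Proof.
  intros H t. remember (rsize t) as N. revert t HeqN.
  induction N as [N IH] using lt_wf_ind. intros t ->. apply H. intros t' Ht'. eapply IH; eauto.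
Qed.

Lemma size2_ind {L A L' B} (P : rtree L A -> rtree L' B -> Prop) :
  (forall a b, (forall a' b', rsize a' + rsize b' < rsize a + rsize b -> P a' b') -> P a b) ->
  forall a b, P a b.
Proof.
  intros H a b. remember (rsize a + rsize b) as N. revert a b HeqN.
  induction N as [N IH] using lt_wf_ind. intros a b ->. apply H. intros a' b' Hl. eapply IH; eauto.
Qed.

Lemma size3_ind {L A} (P : rtree L A -> rtree L A -> rtree L A -> Prop) :
  (forall a b c, (forall a' b' c', rsize a' + rsize b' + rsize c' < rsize a + rsize b + rsize c ->
     P a' b' c') -> P a b c) ->
  forall a b c, P a b c.
Proof.
  intros H a b c. remember (rsize a + rsize b + rsize c) as N. revert a b c HeqN.
  induction N as [N IH] using lt_wf_ind. intros a b c ->. apply H. intros a' b' c' Hl. eapply IH; eauto.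
Qed.

Section Tle.
Context {L : Type} (lv : L -> nat) (X : PreO).
Notation tle := (tle L lv X).
Notation teq := (teq L X).

Lemma tle_LL (x y : X) : tle (Leaf x) (Leaf y) <-> ple X x y.
Proof. split; intro H; [inversion H; auto| constructor; auto]. Qed.

Lemma tle_LN (x : X) j ts : tle (Leaf x) (Node j ts) <-> exists t, In t ts /\ tle (Leaf x) t.
Proof. split; intro H; [inversion H; subst; eauto| destruct H as [t [? ?]]; econstructor; eauto]. Qed.

Lemma tle_NL i ss (y : X) : ~ tle (Node i ss) (Leaf y).
Proof. intro H; inversion H. Qed.

Lemma tle_NN i ss j ts : tle (Node i ss) (Node j ts) <->
  (i = j /\ msi tle ss ts) \/ (lv i <= lv j /\ exists t, In t ts /\ tle (Node i ss) t).
Proof.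
  split; intro H.
  - inversion H; subst.
    + left. split; auto. apply ms_le_msi; auto.
    + right. eauto.
  - destruct H as [[-> H]|[H [t [Ht H']]]].
    + apply tle_NN. apply ms_le_msi; auto.
    + eapply tle_NN'; eauto.
Qed.

Lemma msi_sum {A B} (R : A -> B -> Prop) (f : A -> nat) (g : B -> nat) l k :
  msi R l k -> (forall a b, In a l -> In b k -> R a b -> f a <= g b) ->
  list_sum (map f l) <= list_sum (map g k).
Proof.
  revert k; induction l as [|a l IH]; intros k H Hfg; simpl; [lia|].
  destruct H as [b [k' [P [Rab H]]]].
  rewrite (Permutation_list_sum (Permutation_map g P)). simpl.
  assert (f a <= g b).
  { apply Hfg; auto; [left; auto|]. apply Permutation_in with (b :: k'); [apply Permutation_sym; auto|left; auto]. }
  assert (list_sum (map f l) <= list_sum (map g k')).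
  { apply IH; auto. intros. apply Hfg; auto; [right; auto|].
    apply Permutation_in with (b :: k'); [apply Permutation_sym; auto|right; auto]. }
  lia.
Qed.

Lemma tle_size : forall a b, tle a b -> rsize a <= rsize b.
Proof.
  apply (size2_ind (fun a b => tle a b -> rsize a <= rsize b)). intros a b IH H.
  destruct a as [x|i ss]; destruct b as [y|j ts].
  - simpl; lia.
  - pose proof (rsize_pos (Node j ts)). simpl in *; lia.
  - apply tle_NL in H; contradiction.
  - apply tle_NN in H. destruct H as [[-> H]|[_ [t [Ht H]]]].
    + simpl. apply le_n_S. apply msi_sum with tle; auto.
      intros a b Ha Hb Hab. apply IH; auto. pose proof (rsize_in j a ss Ha).
      pose proof (rsize_in j b ts Hb). lia.
    + pose proof (rsize_in j t ts Ht).
      assert (rsize (Node i ss) <= rsize t) by (apply IH; auto; lia). lia.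
Qed.

Lemma tle_trans (Xt : forall x y z : X, ple X x y -> ple X y z -> ple X x z) :
  forall a b c, tle a b -> tle b c -> tle a c.
Proof.
  apply (size3_ind (fun a b c => tle a b -> tle b c -> tle a c)). intros a b c IH H1 H2.
  pose proof H1 as K1; pose proof H2 as K2.
  destruct a as [x|i ss]; destruct b as [y|j ts]; destruct c as [z|k us];
    try (apply tle_NL in H1; contradiction); try (apply tle_NL in H2; contradiction).
  - apply tle_LL in H1; apply tle_LL in H2; apply tle_LL; eauto.
  - apply tle_LN in H2. destruct H2 as [u [Hu H2]]. apply tle_LN. exists u. split; auto.
    apply IH with (Leaf y); auto. pose proof (rsize_in k u us Hu). lia.
  - apply tle_LN in H1. destruct H1 as [t [Ht H1]]. apply tle_NN in H2. apply tle_LN.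
    pose proof (rsize_in j t ts Ht).
    destruct H2 as [[<- H2]|[_ [u [Hu H2]]]].
    + destruct (msi_in _ _ _ _ H2 Ht) as [u [Hu Htu]]. exists u. split; auto.
      apply IH with t; auto. pose proof (rsize_in j u us Hu). lia.
    + exists u. split; auto. apply IH with (Node j ts); auto.
      pose proof (rsize_in k u us Hu). lia.
  - apply tle_NN in H1. apply tle_NN in H2. apply tle_NN.
    destruct H1 as [[<- H1]|[L1 [t [Ht H1]]]]; destruct H2 as [[<- H2]|[L2 [u [Hu H2]]]].
    + left. split; auto. eapply msi_trans; [|exact H1|exact H2].
      intros a b c Ha Hb Hc. apply IH.
      pose proof (rsize_in i a ss Ha). pose proof (rsize_in i b ts Hb). pose proof (rsize_in i c us Hc). lia.
    + right. split; auto. exists u. split; auto. apply IH with (Node i ts); auto.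
      pose proof (rsize_in k u us Hu). lia.
    + right. split; auto. destruct (msi_in _ _ _ _ H2 Ht) as [u [Hu Htu]]. exists u. split; auto.
      apply IH with t; auto. pose proof (rsize_in j t ts Ht). pose proof (rsize_in j u us Hu). lia.
    + right. split; [lia|]. exists u. split; auto. apply IH with (Node j ts); auto.
      pose proof (rsize_in k u us Hu). lia.
Qed.

Lemma tle_refl (Xr : forall x : X, ple X x x) : forall a, tle a a.
Proof.
  intro a. induction a as [x|i ts IH] using rtree_ind'.
  - apply tle_LL; auto.
  - apply tle_NN. left. split; auto. apply msi_refl. rewrite Forall_forall in IH. auto.
Qed.

Lemma teq_tle (Xr : forall x : X, ple X x x) : forall a b, teq a b -> tle a b.
Proof.
  intro a. induction a as [x|i ts IH] using rtree_ind'; intros b H.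
  - apply teq_leaf_inv in H; subst. apply tle_LL; auto.
  - apply teq_node_inv in H. destruct H as [ss [us [-> [F P]]]].
    apply tle_NN. left. split; auto. eapply msi_perm_r; [exact P|]. apply msi_F2.
    eapply Forall2_mono_F; eauto.
Qed.

Lemma tle_antisym (HX : is_po X) : forall a b, tle a b -> tle b a -> teq a b.
Proof.
  destruct HX as [Xr [Xt Xa]].
  intro a. induction a as [a IH] using size_ind. intros b H1 H2.
  pose proof (tle_size _ _ H1). pose proof (tle_size _ _ H2).
  destruct a as [x|i ss]; destruct b as [y|j ts];
    try (apply tle_NL in H1; contradiction); try (apply tle_NL in H2; contradiction).
  - apply tle_LL in H1; apply tle_LL in H2. rewrite (Xa _ _ H1 H2). apply teq_refl.
  - apply tle_NN in H1. apply tle_NN in H2.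
    destruct H1 as [[<- H1]|[_ [t [Ht H1]]]];
      [|pose proof (tle_size _ _ H1); pose proof (rsize_in j t ts Ht); lia].
    destruct H2 as [[_ H2]|[_ [t [Ht H2]]]];
      [|pose proof (tle_size _ _ H2); pose proof (rsize_in i t ss Ht); lia].
    destruct (msi_antisym tle teq (tle_trans Xt) ss ts) as [ts' [F P]]; auto.
    + intros a b Ha Hb Hab Hba. apply IH; auto. apply rsize_in; auto.
    + apply teq_node with ts'; auto.
Qed.

Lemma tle_compat (Xr : forall x : X, ple X x x) (Xt : forall x y z : X, ple X x y -> ple X y z -> ple X x z) :
  forall a a' b b', teq a a' -> teq b b' -> tle a b -> tle a' b'.
Proof.
  intros a a' b b' E1 E2 H. apply tle_trans with a; auto.
  apply teq_tle; auto. apply teq_sym; auto.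
  apply tle_trans with b; auto. apply teq_tle; auto.
Qed.
End Tle.

Definition qdil (F : PreO -> Type) (E : forall X, F X -> F X -> Prop)
  (le : forall X, F X -> F X -> Prop) (fm : forall X Y : PreO, (X -> Y) -> F X -> F Y)
  (sp : forall X : PreO, F X -> list X) : Dil :=
  mkDil (fun X => mkPreO (quot (F X) (E X)) (fun s t => le X (rep s) (rep t)))
        (fun X Y f s => cls (E Y) (fm X Y f (rep s)))
        (fun X s => sp X (rep s)).

Section QDil.
Context (F : PreO -> Type) (E : forall X, F X -> F X -> Prop)
  (le : forall X, F X -> F X -> Prop) (fm : forall X Y : PreO, (X -> Y) -> F X -> F Y)
  (sp : forall X : PreO, F X -> list X).
Hypothesis Erefl : forall X a, E X a a.
Hypothesis Esym : forall X a b, E X a b -> E X b a.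
Hypothesis Etrans : forall X a b c, E X a b -> E X b c -> E X a c.
Hypothesis le_refl : forall X, is_po X -> forall a, le X a a.
Hypothesis le_trans : forall X, is_po X -> forall a b c, le X a b -> le X b c -> le X a c.
Hypothesis le_anti : forall X, is_po X -> forall a b, le X a b -> le X b a -> E X a b.
Hypothesis le_E : forall X, is_po X -> forall a b, E X a b -> le X a b.
Hypothesis fm_E : forall X Y f a b, E X a b -> E Y (fm X Y f a) (fm X Y f b).
Hypothesis fm_id : forall X a, fm X X (fun x => x) a = a.
Hypothesis fm_comp : forall (X Y Z : PreO) (f : X -> Y) (g : Y -> Z) a,
  fm X Z (fun x => g (f x)) a = fm Y Z g (fm X Y f a).
Hypothesis fm_refl : forall (X Y : PreO) (f : X -> Y) a b,
  (forall x y, In x (sp X a) -> In y (sp X b) -> ple Y (f x) (f y) -> ple X x y) ->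
  le Y (fm X Y f a) (fm X Y f b) -> le X a b.
Hypothesis fm_pres : forall (X Y : PreO) (f : X -> Y) a b,
  (forall x y, ple X x y -> ple Y (f x) (f y)) -> le X a b -> le Y (fm X Y f a) (fm X Y f b).
Hypothesis sp_fm : forall (X Y : PreO) (f : X -> Y) a y,
  In y (sp Y (fm X Y f a)) <-> exists x, In x (sp X a) /\ f x = y.
Hypothesis sp_E : forall X a b x, E X a b -> (In x (sp X a) <-> In x (sp X b)).
Hypothesis fm_pre : forall (X Y : PreO) (f : X -> Y) b,
  (forall y, In y (sp Y b) -> exists x, f x = y) -> exists a, fm X Y f a = b.
Hypothesis le_norm : forall X, is_po X -> forall a b, le X a b -> fin_le X (sp X a) (sp X b).

Lemma le_compat X (HX : is_po X) a a' b b' : E X a a' -> E X b b' -> le X a b -> le X a' b'.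
Proof.
  intros H1 H2 H. apply le_trans with a; auto.
  apply le_trans with b; auto.
Qed.

Lemma qdil_normal : is_normal_dilator (qdil F E le fm sp).
Proof.
  assert (RC : forall X a, E X a (rep (cls (E X) a))) by (intros; apply rep_cls; eauto).
  assert (RC' : forall X a, E X (rep (cls (E X) a)) a) by (intros; apply Esym, RC).
  unfold is_normal_dilator, is_PO_dilator.
  split; [split; [|split; [|split; [|split; [|split; [|split]]]]]|].
  - intros X HX. simpl. split; [|split].
    + intro x; apply le_refl; auto.
    + intros x y z; apply le_trans; auto.
    + intros x y H1 H2. rewrite <- (cls_rep (E X) x), <- (cls_rep (E X) y).
      apply cls_eq; eauto.
  - intros X Y f HX HY Hf s t H. simpl in *.
    apply (fm_refl X Y f); [intros; apply Hf; auto|].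
    eapply le_compat; [exact HY| apply RC' | apply RC' | exact H].
  - intros X HX s. simpl. rewrite fm_id. apply cls_rep; eauto.
  - intros X Y Z f g HX HY HZ Hf Hg s. simpl. rewrite fm_comp. apply cls_eq; eauto.
  - intros X Y f HX HY Hf s t. simpl. split; intro H.
    + apply (fm_refl X Y f); [intros; apply Hf; auto|].
      eapply le_compat; [exact HY| apply RC' | apply RC' | exact H].
    + eapply le_compat; [exact HY| apply RC | apply RC |]. apply fm_pres; auto.
      intros; apply Hf; auto.
  - intros X Y f HX HY Hf s y. simpl. rewrite <- sp_fm. apply sp_E. apply RC'.
  - intros X Y f HX HY Hf s. simpl. split.
    + intros [t <-] y Hy. apply (proj1 (sp_E _ _ _ _ (RC' _ _))) in Hy. apply sp_fm in Hy.
      destruct Hy as [x [_ Hx]]; eauto.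
    + intro H. destruct (fm_pre X Y f (rep s) H) as [a Ha]. exists (cls (E X) a).
      transitivity (cls (E Y) (rep s)); [apply cls_eq; eauto; rewrite <- Ha; apply fm_E, RC' | apply cls_rep; eauto].
  - intros X HX s t H. simpl in *. apply le_norm; auto.
Qed.
End QDil.

Lemma emb_qe (X Y : PreO) (f : X -> Y) : embedding X Y f -> quasi_emb X Y f.
Proof. intros H x y; apply H. Qed.

Lemma compose_normal V W : is_normal_dilator V -> is_normal_dilator W ->
  is_normal_dilator (compose V W).
Proof.
  intros [[V1 [V2 [V3 [V4 [V5 [V6 V7]]]]]] VN] [[W1 [W2 [W3 [W4 [W5 [W6 W7]]]]]] WN].
  unfold is_normal_dilator, is_PO_dilator.
  split; [split; [|split; [|split; [|split; [|split; [|split]]]]]|]; simpl.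
  - intros X HX. apply V1, W1, HX.
  - intros X Y f HX HY Hf. apply V2; auto.
  - intros X HX s.
    assert (E : dmap W (fun x : X => x) = (fun r => r)).
    { apply functional_extensionality. intro r. apply W3; auto. }
    rewrite E. apply V3; auto.
  - intros X Y Z f g HX HY HZ Hf Hg s.
    assert (E : dmap W (fun x : X => g (f x)) = (fun r => dmap W g (dmap W f r))).
    { apply functional_extensionality. intro r. apply W4; auto. }
    rewrite E. apply (V4 (dobj W X) (dobj W Y) (dobj W Z)); auto.
  - intros X Y f HX HY Hf. apply V5; auto.
  - intros X Y f HX HY Hf s y. rewrite !in_flat_map. split.
    + intros [r' [Hr' Hy]]. apply V6 in Hr'; try apply W2; auto. destruct Hr' as [r [Hr <-]].
      apply W6 in Hy; auto. destruct Hy as [x [Hx <-]]. exists x. split; auto.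
      apply in_flat_map. eauto.
    + intros [x [Hx <-]]. apply in_flat_map in Hx. destruct Hx as [r [Hr Hx]].
      exists (dmap W f r). split.
      * apply V6; try apply W2; eauto.
      * apply W6; eauto.
  - intros X Y f HX HY Hf s. split.
    + intros [t <-] y Hy. apply in_flat_map in Hy. destruct Hy as [r' [Hr' Hy]].
      apply V6 in Hr'; try apply W2; try apply emb_qe; auto.
      destruct Hr' as [r [_ <-]]. apply W6 in Hy; try apply emb_qe; auto.
      destruct Hy as [x [_ <-]]; eauto.
    + intro H. apply (V7 (dobj W X) (dobj W Y)); auto.
      intros r Hr. apply W7; auto. intros y Hy. apply H. apply in_flat_map; eauto.
  - intros X HX s t H. intros y Hy. apply in_flat_map in Hy. destruct Hy as [r [Hr Hy]].
    destruct (VN (dobj W X) (W1 X HX) s t H r Hr) as [r' [Hr' Hrr']].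
    destruct (WN X HX r r' Hrr' y Hy) as [z [Hz Hyz]]. exists z. split; auto.
    apply in_flat_map; eauto.
Qed.

Section RMap.
Context {L : Type} (lv : L -> nat).

Lemma rmap_teq {A B} (f : A -> B) a b : teq L A a b -> teq L B (rmap f a) (rmap f b).
Proof.
  revert b; induction a as [x|i ts IH] using rtree_ind'; intros b H.
  - apply teq_leaf_inv in H; subst; constructor.
  - apply teq_node_inv in H. destruct H as [ss [us [-> [F P]]]]. simpl.
    apply teq_node with (map (rmap f) ss).
    + apply Forall2_map_both. eapply Forall2_mono_F; eauto.
    + apply Permutation_map; auto.
Qed.

Lemma rmap_id {A} (a : rtree L A) : rmap (fun x => x) a = a.
Proof.
  induction a as [x|i ts IH] using rtree_ind'; simpl; auto. f_equal.
  induction IH; simpl; auto. f_equal; auto.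
Qed.

Lemma rmap_comp {A B C} (f : A -> B) (g : B -> C) (a : rtree L A) :
  rmap (fun x => g (f x)) a = rmap g (rmap f a).
Proof.
  induction a as [x|i ts IH] using rtree_ind'; simpl; auto. f_equal.
  induction IH; simpl; auto. f_equal; auto.
Qed.

Lemma rmap_ext_in {A B} (f g : A -> B) (a : rtree L A) :
  (forall x, In x (rsupp a) -> f x = g x) -> rmap f a = rmap g a.
Proof.
  induction a as [x|i ts IH] using rtree_ind'; simpl; intro H.
  - f_equal. apply H; left; auto.
  - f_equal. apply map_ext_in. intros t Ht. rewrite Forall_forall in IH. apply IH; auto.
    intros x Hx. apply H. apply in_flat_map; eauto.
Qed.

Lemma rsupp_rmap {A B} (f : A -> B) (a : rtree L A) : rsupp (rmap f a) = map f (rsupp a).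
Proof.
  induction a as [x|i ts IH] using rtree_ind'; simpl; auto.
  induction IH; simpl; auto. rewrite map_app. f_equal; auto.
Qed.

Lemma in_rsupp_node {A} (i : L) ts t (x : A) : In t ts -> In x (rsupp t) -> In x (rsupp (Node i ts)).
Proof. intros. simpl. apply in_flat_map. eauto. Qed.

Lemma rmap_refl (X Y : PreO) (f : X -> Y) : forall a b,
  (forall x y, In x (rsupp a) -> In y (rsupp b) -> ple Y (f x) (f y) -> ple X x y) ->
  tle L lv Y (rmap f a) (rmap f b) -> tle L lv X a b.
Proof.
  apply (size2_ind (fun a b => _ -> _ -> _)). intros a b IH Hf H.
  destruct a as [x|i ss]; destruct b as [y|j ts]; simpl in H.
  - apply tle_LL in H. apply tle_LL. apply Hf; simpl; auto.
  - apply tle_LN in H. destruct H as [t' [Ht' H]]. apply in_map_iff in Ht'.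
    destruct Ht' as [t [<- Ht]]. apply tle_LN. exists t. split; auto.
    apply IH; [pose proof (rsize_in j t ts Ht); lia| |exact H].
    intros x' y' Hx' Hy' Hxy. apply Hf; auto. eapply in_rsupp_node; eauto.
  - apply tle_NL in H. contradiction.
  - apply tle_NN in H. apply tle_NN. destruct H as [[<- H]|[Hl [t' [Ht' H]]]].
    + left. split; auto. rewrite msi_map_l, msi_map_r in H. eapply msi_mono; [|exact H].
      intros a b Ha Hb Hab. apply IH; auto.
      * pose proof (rsize_in i a ss Ha). pose proof (rsize_in i b ts Hb). lia.
      * intros x' y' Hx' Hy' Hxy. apply Hf; auto; eapply in_rsupp_node; eauto.
    + right. split; auto. apply in_map_iff in Ht'. destruct Ht' as [t [<- Ht]].
      exists t. split; auto. apply IH; [pose proof (rsize_in j t ts Ht); lia| |exact H].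
      intros x' y' Hx' Hy' Hxy. apply Hf; auto. eapply in_rsupp_node; eauto.
Qed.

Lemma rmap_pres (X Y : PreO) (f : X -> Y) : forall a b,
  (forall x y, ple X x y -> ple Y (f x) (f y)) ->
  tle L lv X a b -> tle L lv Y (rmap f a) (rmap f b).
Proof.
  apply (size2_ind (fun a b => _ -> _ -> _)). intros a b IH Hf H.
  destruct a as [x|i ss]; destruct b as [y|j ts]; simpl.
  - apply tle_LL in H. apply tle_LL. apply Hf; auto.
  - apply tle_LN in H. destruct H as [t [Ht H]]. apply tle_LN. exists (rmap f t). split.
    + apply in_map; auto.
    + apply (IH (Leaf x) t); auto. pose proof (rsize_in j t ts Ht); lia.
  - apply tle_NL in H. contradiction.
  - apply tle_NN in H. apply tle_NN. destruct H as [[<- H]|[Hl [t [Ht H]]]].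
    + left. split; auto. rewrite msi_map_l, msi_map_r. eapply msi_mono; [|exact H].
      intros a b Ha Hb Hab. apply IH; auto.
      pose proof (rsize_in i a ss Ha). pose proof (rsize_in i b ts Hb). lia.
    + right. split; auto. exists (rmap f t). split; [apply in_map; auto|].
      apply (IH (Node i ss) t); auto. pose proof (rsize_in j t ts Ht); lia.
Qed.

Lemma rmap_pre {A B} (f : A -> B) : forall b,
  (forall y, In y (rsupp b) -> exists x, f x = y) -> exists a : rtree L A, rmap f a = b.
Proof.
  intro b. induction b as [y|j ts IH] using rtree_ind'; intro H.
  - destruct (H y) as [x <-]; [left; auto|]. exists (Leaf x); auto.
  - assert (exists as_, map (rmap f) as_ = ts) as [as_ E].
    { clear - IH H. induction IH as [|t ts Ht Hts IH'].
      - exists []; auto.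
      - destruct Ht as [a Ha]. { intros y Hy. apply H. simpl. apply in_app_iff; auto. }
        destruct IH' as [as_ E]. { intros y Hy. apply H. simpl. apply in_app_iff; auto. }
        exists (a :: as_). simpl. f_equal; auto. }
    exists (Node j as_). simpl. f_equal; auto.
Qed.

Lemma tle_norm (X : PreO) (Xr : forall x : X, ple X x x) : forall a b,
  tle L lv X a b -> fin_le X (rsupp a) (rsupp b).
Proof.
  apply (size2_ind (fun a b => _ -> _)). intros a b IH H.
  destruct a as [x|i ss]; destruct b as [y|j ts].
  - apply tle_LL in H. intros z [<-|[]]. exists y. simpl; auto.
  - apply tle_LN in H. destruct H as [t [Ht H]].
    assert (fin_le X (rsupp (L:=L) (Leaf x)) (rsupp t)) as Hf.
    { apply IH; auto. pose proof (rsize_in j t ts Ht); lia. }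
    intros z Hz. destruct (Hf z Hz) as [w [Hw Hzw]]. exists w. split; auto. eapply in_rsupp_node; eauto.
  - apply tle_NL in H. contradiction.
  - apply tle_NN in H. destruct H as [[<- H]|[Hl [t [Ht H]]]].
    + intros z Hz. simpl in Hz. apply in_flat_map in Hz. destruct Hz as [s [Hs Hz]].
      destruct (msi_in _ _ _ _ H Hs) as [t [Ht Hst]].
      assert (fin_le X (rsupp s) (rsupp t)) as Hf.
      { apply IH; auto. pose proof (rsize_in i s ss Hs). pose proof (rsize_in i t ts Ht). lia. }
      destruct (Hf z Hz) as [w [Hw Hzw]]. exists w. split; auto. eapply in_rsupp_node; eauto.
    + assert (fin_le X (rsupp (Node i ss)) (rsupp t)) as Hf.
      { apply IH; auto. pose proof (rsize_in j t ts Ht); lia. }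
      intros z Hz. destruct (Hf z Hz) as [w [Hw Hzw]]. exists w. split; auto. eapply in_rsupp_node; eauto.
Qed.
End RMap.

Definition Tq (L : Type) (lv : L -> nat) : Dil :=
  qdil (fun X => rtree L X) (fun X => teq L X) (fun X => tle L lv X)
       (fun X Y f => rmap f) (fun X => rsupp).

Lemma T_normal L lv : is_normal_dilator (Tq L lv).
Proof.
  apply qdil_normal.
  - intros; apply teq_refl.
  - intros; apply teq_sym; auto.
  - intros; eapply teq_trans; eauto.
  - intros X [Xr _] a. apply tle_refl; auto.
  - intros X [_ [Xt _]] a b c. apply tle_trans; auto.
  - intros X HX a b. apply tle_antisym; auto.
  - intros X [Xr _] a b. apply teq_tle; auto.
  - intros X Y f a b. apply rmap_teq.
  - intros X a. apply rmap_id.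
  - intros X Y Z f g a. apply rmap_comp.
  - intros X Y f a b. apply rmap_refl.
  - intros X Y f a b. apply rmap_pres.
  - intros X Y f a y. rewrite rsupp_rmap. rewrite in_map_iff. firstorder.
  - intros X a b x H. apply rsupp_teq; auto.
  - intros X Y f b. apply rmap_pre.
  - intros X [Xr _] a b. apply tle_norm; auto.
Qed.

Lemma Tdil_normal n : is_normal_dilator (Tdil n).
Proof. exact (T_normal (lbl n) lblv). Qed.

Definition Mq : Dil :=
  qdil (fun X => list X) (fun X => @Permutation X) (fun X => ms_le (ple X))
       (fun X Y f => map f) (fun X l => l).

Lemma M_normal : is_normal_dilator Mdil.
Proof.
  change (is_normal_dilator Mq). apply qdil_normal.
  - intros; apply Permutation_refl.
  - intros; apply Permutation_sym; auto.
  - intros; eapply perm_trans; eauto.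
  - intros X [Xr _] a. apply ms_le_msi, msi_refl; auto.
  - intros X [_ [Xt _]] a b c H1 H2. apply ms_le_msi. apply ms_le_msi in H1, H2.
    eapply msi_trans; [|exact H1|exact H2]. simpl. intros; eauto.
  - intros X [Xr [Xt Xa]] a b H1 H2. apply ms_le_msi in H1, H2.
    destruct (msi_antisym (ple X) eq Xt a b) as [b' [F P]]; auto.
    assert (a = b') as ->. { clear - F. induction F; subst; auto. }
    auto.
  - intros X [Xr _] a b P. apply ms_le_msi. eapply msi_perm_r; [exact P|]. apply msi_refl; auto.
  - intros X Y f a b P. apply Permutation_map; auto.
  - intros X a. apply map_id.
  - intros X Y Z f g a. symmetry; apply map_map.
  - intros X Y f a b Hf H. apply ms_le_msi. apply ms_le_msi in H.
    rewrite msi_map_l, msi_map_r in H. eapply msi_mono; [|exact H]. auto.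
  - intros X Y f a b Hf H. apply ms_le_msi. apply ms_le_msi in H.
    rewrite msi_map_l, msi_map_r. eapply msi_mono; [|exact H]. auto.
  - intros X Y f a y. rewrite in_map_iff. firstorder.
  - intros X a b x P. split; intro; [apply Permutation_in with a | apply Permutation_in with b]; auto. apply Permutation_sym; auto.
  - intros X Y f b H. induction b as [|y b IH].
    + exists []; auto.
    + destruct (H y) as [x <-]; [left; auto|]. destruct IH as [a <-].
      { intros; apply H; right; auto. }
      exists (x :: a); auto.
  - intros X [Xr _] a b H. apply ms_le_msi in H. intros x Hx. eapply msi_in; eauto.
Qed.

Lemma W_normal n : is_normal_dilator (compose Mdil (Tdil n)).
Proof. apply compose_normal; [apply M_normal | apply Tdil_normal]. Qed.

Lemma memb_mmap {n A B} (f : A -> B) (m : mtree n A) : memb (mmap f m) = rmap f (memb m).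
Proof. destruct m; reflexivity. Qed.

Definition Tmq (n : nat) : Dil :=
  qdil (fun X => mtree n X) (fun X => meq n X)
       (fun X a b => tle (lbl (S n)) lblv X (memb a) (memb b))
       (fun X Y f => mmap f) (fun X a => rsupp (memb a)).

Lemma Tm_normal n : is_normal_dilator (Tmdil n).
Proof.
  change (is_normal_dilator (Tmq n)). apply qdil_normal; unfold meq.
  - intros; apply teq_refl.
  - intros; apply teq_sym; auto.
  - intros; eapply teq_trans; eauto.
  - intros X [Xr _] a. apply tle_refl; auto.
  - intros X [_ [Xt _]] a b c. apply tle_trans; auto.
  - intros X HX a b. apply tle_antisym; auto.
  - intros X [Xr _] a b. apply teq_tle; auto.
  - intros X Y f a b. rewrite !memb_mmap. apply rmap_teq.
  - intros X a. destruct a; simpl; auto. f_equal. rewrite <- (map_id ts) at 2.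
    apply map_ext. apply rmap_id.
  - intros X Y Z f g a. destruct a; simpl; auto. f_equal. rewrite map_map. apply map_ext.
    intro; apply rmap_comp.
  - intros X Y f a b. rewrite !memb_mmap. apply rmap_refl.
  - intros X Y f a b. rewrite !memb_mmap. apply rmap_pres.
  - intros X Y f a y. rewrite memb_mmap, rsupp_rmap. rewrite in_map_iff. firstorder.
  - intros X a b x H. apply rsupp_teq; auto.
  - intros X Y f b H. destruct b as [y|ts].
    + destruct (H y) as [x <-]; [left; auto|]. exists (MLeaf x); auto.
    + destruct (rmap_pre f (Node (lbl0 n) ts) H) as [[x|i as_] E]; simpl in E; [discriminate|].
      injection E as -> E. exists (MNode as_). simpl. f_equal; auto.
  - intros X [Xr _] a b. apply tle_norm; auto.
Qed.

#[global] Instance teq_Equiv L A : Equivalence (teq L A).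
Proof. split; [intro; apply teq_refl | intros ? ?; apply teq_sym | intros ? ? ?; apply teq_trans]. Qed.

Lemma tle_proper L lv (X : PreO) (HX : is_po X) :
  Proper (teq L X ==> teq L X ==> iff) (tle L lv X).
Proof.
  destruct HX as [Xr [Xt _]]. intros a a' Ha b b' Hb.
  split; intro H; eapply tle_compat; eauto; symmetry; auto.
Qed.

Lemma lsucc_inj {n} (i j : lbl n) : lsucc i = lsucc j -> i = j.
Proof.
  intro H. apply (f_equal (@proj1_sig _ _)) in H. simpl in H. injection H as H.
  apply sig_eq. auto.
Qed.

Lemma lsucc_lbl0 {n} (i : lbl n) : lsucc i <> lbl0 n.
Proof. intro H. apply (f_equal (@proj1_sig _ _)) in H. simpl in H. discriminate. Qed.

Lemma po_Tm n (X : PreO) : is_po X -> is_po (Tmobj n X).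
Proof. intro HX. destruct (Tm_normal n) as [[H _] _]. apply (H X HX). Qed.

Section FP.
Context (n : nat) (X : PreO) (HX : is_po X).
Notation Z := (Tmobj n X).
Notation W := (compose Mdil (Tdil n)).
Notation TL := (tle (lbl (S n)) lblv X).
Notation TT := (teq (lbl (S n)) X).
Notation TLn := (tle (lbl n) lblv Z).

Local Instance TL_proper : Proper (TT ==> TT ==> iff) TL := tle_proper _ _ X HX.
Let HZ : is_po Z := po_Tm n X HX.
Local Instance TLn_proper : Proper (teq (lbl n) Z ==> teq (lbl n) Z ==> iff) TLn :=
  tle_proper _ _ Z HZ.

Lemma memb_rep_cls (m : mtree n X) : TT (memb (rep (cls (meq n X) m))) (memb m).
Proof.
  apply (rep_cls' (meq n X)); unfold meq; intros; first [reflexivity | symmetry; auto | etransitivity; eauto].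
Qed.

Lemma rep_pi (c : dobj (Tdil n) Z) : TT (rep (pi n X c)) (rpi (rep c)).
Proof. unfold pi. apply (rep_cls' (teq _ X)); intros; first [reflexivity | symmetry; auto | etransitivity; eauto]. Qed.

Lemma rpi_teq (a b : rtree (lbl n) Z) : teq (lbl n) Z a b -> TT (rpi a) (rpi b).
Proof.
  revert b; induction a as [x|i ts IH] using rtree_ind'; intros b H.
  - apply teq_leaf_inv in H; subst; reflexivity.
  - apply teq_node_inv in H. destruct H as [ss [us [-> [F P]]]]. simpl.
    apply teq_node with (map rpi ss).
    + apply Forall2_map_both. eapply Forall2_mono_F; eauto.
    + apply Permutation_map; auto.
Qed.

Lemma memb_le_succ (m : mtree n X) (i : lbl n) cs :
  TL (memb m) (Node (lsucc i) cs) <-> exists c, In c cs /\ TL (memb m) c.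
Proof.
  destruct m as [x|ts]; simpl.
  - apply tle_LN.
  - rewrite tle_NN. split.
    + intros [[E _]|[_ H]]; auto. symmetry in E. apply lsucc_lbl0 in E. contradiction.
    + intro H. right. split; auto. simpl. lia.
Qed.

Lemma memb_le_rpi (m : mtree n X) b :
  TL (memb m) (rpi b) <-> exists z, In z (rsupp b) /\ TL (memb m) (memb (rep z)).
Proof.
  induction b as [z|i bs IH] using rtree_ind'; simpl.
  - split; [intro; exists z; auto| intros [z' [[<-|[]] H]]; auto].
  - rewrite memb_le_succ. split.
    + intros [c [Hc H]]. apply in_map_iff in Hc. destruct Hc as [b [<- Hb]].
      rewrite Forall_forall in IH. apply IH in H; auto. destruct H as [z [Hz H]].
      exists z. split; auto. apply in_flat_map; eauto.
    + intros [z [Hz H]]. apply in_flat_map in Hz. destruct Hz as [b [Hb Hz]].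
      exists (rpi b). split; [apply in_map; auto|]. rewrite Forall_forall in IH. apply IH; eauto.
Qed.

Lemma rpi_emb : forall a b, TLn a b <-> TL (rpi a) (rpi b).
Proof.
  apply (size2_ind (fun a b => _ <-> _)). intros a b IH.
  destruct a as [z|i as_]; destruct b as [z'|j bs]; simpl.
  - apply tle_LL.
  - rewrite tle_LN, memb_le_succ. split.
    + intros [t [Ht H]]. exists (rpi t). split; [apply in_map; auto|].
      apply (IH (Leaf z) t); auto. pose proof (rsize_in (A:=Z) j t bs Ht); lia.
    + intros [c [Hc H]]. apply in_map_iff in Hc. destruct Hc as [t [<- Ht]]. exists t. split; auto.
      apply (proj2 (IH (Leaf z) t ltac:(pose proof (rsize_in (A:=Z) j t bs Ht); lia))); exact H.
  - split; intro H; [apply tle_NL in H; contradiction|].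
    destruct (rep z') as [y|ts]; simpl in H; [apply tle_NL in H; contradiction|].
    apply tle_NN in H. destruct H as [[E _]|[Hl _]]; [apply lsucc_lbl0 in E; contradiction|].
    simpl in Hl. lia.
  - rewrite !tle_NN. simpl. split.
    + intros [[<- H]|[Hl [t [Ht H]]]].
      * left. split; auto. rewrite msi_map_l, msi_map_r. eapply msi_mono; [|exact H].
        intros a b Ha Hb Hab. apply IH; auto.
        pose proof (rsize_in (A:=Z) i a as_ Ha). pose proof (rsize_in (A:=Z) i b bs Hb). lia.
      * right. split; [unfold lblv in *; simpl in *; lia|]. exists (rpi t). split; [apply in_map; auto|].
        apply (IH (Node i as_) t); auto. pose proof (rsize_in (A:=Z) j t bs Ht); lia.
    + intros [[E H]|[Hl [c [Hc H]]]].
      * apply lsucc_inj in E. subst j. left. split; auto.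
        rewrite msi_map_l, msi_map_r in H. eapply msi_mono; [|exact H].
        intros a b Ha Hb Hab. apply IH; auto.
        pose proof (rsize_in (A:=Z) i a as_ Ha). pose proof (rsize_in (A:=Z) i b bs Hb). lia.
      * right. split; [unfold lblv in *; simpl in *; lia|]. apply in_map_iff in Hc. destruct Hc as [t [<- Ht]]. exists t.
        split; auto. apply (proj2 (IH (Node i as_) t ltac:(pose proof (rsize_in (A:=Z) j t bs Ht); lia))); exact H.
Qed.

Definition Al (s : dobj W Z) : list (rtree (lbl (S n)) X) := map (fun t => rep (pi n X t)) (rep s).

Lemma memb_iota x : TT (memb (rep (iota_n n X x))) (Leaf x).
Proof. apply (memb_rep_cls (MLeaf x)). Qed.

Lemma memb_kappa s : TT (memb (rep (kappa_n n X s))) (Node (lbl0 n) (Al s)).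
Proof. apply (memb_rep_cls (MNode _)). Qed.

Lemma ple_Z (a b : Z) : ple Z a b <-> TL (memb (rep a)) (memb (rep b)).
Proof. reflexivity. Qed.

Lemma supp_W (s : dobj W Z) : dsupp W s = flat_map (fun r => rsupp (rep r)) (rep s).
Proof. reflexivity. Qed.

Lemma le_kappa_supp (m : mtree n X) (t : dobj W Z) :
  (exists c, In c (Al t) /\ TL (memb m) c) <->
  (exists z, In z (dsupp W t) /\ TL (memb m) (memb (rep z))).
Proof.
  rewrite supp_W. split.
  - intros [c [Hc H]]. unfold Al in Hc. apply in_map_iff in Hc. destruct Hc as [r [<- Hr]].
    rewrite rep_pi in H. apply memb_le_rpi in H. destruct H as [z [Hz H]].
    exists z. split; auto. apply in_flat_map; eauto.
  - intros [z [Hz H]]. apply in_flat_map in Hz. destruct Hz as [r [Hr Hz]].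
    exists (rep (pi n X r)). split; [unfold Al; apply (in_map (fun t => rep (pi n X t))); auto|].
    rewrite rep_pi. apply memb_le_rpi. eauto.
Qed.

Lemma fp_iota_kappa x t : ple Z (iota_n n X x) (kappa_n n X t) <->
  fin_le Z [iota_n n X x] (dsupp W t).
Proof.
  rewrite ple_Z, memb_iota, memb_kappa, tle_LN.
  change (Leaf x) with (memb (n:=n) (MLeaf x)). rewrite le_kappa_supp. split.
  - intros [z [Hz H]] w [<-|[]]. exists z. split; auto. rewrite ple_Z, memb_iota. auto.
  - intro H. destruct (H (iota_n n X x)) as [z [Hz Hl]]; [left; auto|].
    exists z. split; auto. rewrite ple_Z, memb_iota in Hl. auto.
Qed.

Lemma fp_kappa_kappa s t : ple Z (kappa_n n X s) (kappa_n n X t) <->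
  (ple (dobj W Z) s t \/ fin_le Z [kappa_n n X s] (dsupp W t)).
Proof.
  rewrite ple_Z, memb_kappa, memb_kappa, tle_NN.
  assert (E1 : (lbl0 n = lbl0 n /\ msi TL (Al s) (Al t)) <-> ple (dobj W Z) s t).
  { split.
    - intros [_ H]. simpl. apply ms_le_msi. unfold Al in H.
      rewrite msi_map_l, msi_map_r in H. eapply msi_mono; [|exact H].
      intros a b _ _ Hab. cbv beta in Hab. rewrite !rep_pi in Hab. apply rpi_emb; auto.
    - intros H. split; auto. simpl in H. apply ms_le_msi in H. unfold Al.
      rewrite msi_map_l, msi_map_r. eapply msi_mono; [|exact H].
      intros a b _ _ Hab. cbv beta. rewrite !rep_pi. apply rpi_emb; auto. }
  assert (E2 : ((lblv (lbl0 n) <= lblv (lbl0 n)) /\ (exists c, In c (Al t) /\ TL (Node (lbl0 n) (Al s)) c)) <-> fin_le Z [kappa_n n X s] (dsupp W t)).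
  { change (Node (lbl0 n) (Al s)) with (memb (MNode (n:=n) (Al s))). rewrite le_kappa_supp. split.
    - intros [_ [z [Hz H]]] w [<-|[]]. exists z. split; auto. rewrite ple_Z, memb_kappa. auto.
    - intro H. split; auto. destruct (H (kappa_n n X s)) as [z [Hz Hl]]; [left; auto|].
      exists z. split; auto. rewrite ple_Z, memb_kappa in Hl. auto. }
  rewrite E1, E2. reflexivity.
Qed.
End FP.

Ltac eqv := intros; unfold meq in *; solve [reflexivity | apply teq_refl | apply Permutation_refl
  | apply teq_sym; auto | apply Permutation_sym; auto | eapply teq_trans; eauto | eapply perm_trans; eauto
  | symmetry; auto | etransitivity; eauto].

Lemma W_local_reflect n (A B : PreO) (HB : is_po B) (f : A -> B)
  (s t : dobj (compose Mdil (Tdil n)) A) :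
  (forall z z', In z (dsupp (compose Mdil (Tdil n)) s) -> In z' (dsupp (compose Mdil (Tdil n)) t) ->
     ple B (f z) (f z') -> ple A z z') ->
  ple (dobj (compose Mdil (Tdil n)) B) (dmap (compose Mdil (Tdil n)) f s) (dmap (compose Mdil (Tdil n)) f t) ->
  ple (dobj (compose Mdil (Tdil n)) A) s t.
Proof.
  intros Hf H. simpl in *. apply ms_le_msi. apply ms_le_msi in H.
  eapply msi_perm_l in H; [|apply (rep_cls' (@Permutation _)); eqv].
  eapply msi_perm_r in H; [|apply (rep_cls' (@Permutation _)); eqv].
  rewrite msi_map_l, msi_map_r in H. eapply msi_mono; [|exact H].
  intros c d Hc Hd Hcd. cbv beta in Hcd.
  eapply (tle_compat _ B) in Hcd; [| apply HB | apply HB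
     | apply (rep_cls' (teq _ _)); eqv | apply (rep_cls' (teq _ _)); eqv].
  eapply rmap_refl; [|exact Hcd].
  intros x y Hx Hy. apply Hf; apply in_flat_map; eauto.
Qed.

Lemma supp_dmap_W n (A B : PreO) (f : A -> B) (s : dobj (compose Mdil (Tdil n)) A) y :
  In y (dsupp (compose Mdil (Tdil n)) (dmap (compose Mdil (Tdil n)) f s)) ->
  exists z, In z (dsupp (compose Mdil (Tdil n)) s) /\ f z = y.
Proof.
  simpl. intro H. apply in_flat_map in H. destruct H as [r' [Hr' Hy]].
  eapply Permutation_in in Hr'; [|apply (rep_cls' (@Permutation _)); eqv].
  apply in_map_iff in Hr'. destruct Hr' as [c [<- Hc]].
  apply (proj1 (rsupp_teq _ _ (rep_cls' (teq _ _) (fun a => teq_refl a) (@teq_sym _ _) _) y)) in Hy.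
  rewrite rsupp_rmap in Hy. apply in_map_iff in Hy. destruct Hy as [z [<- Hz]].
  exists z. split; auto. apply in_flat_map; eauto.
Qed.

Lemma Forall2_map_r_in {A B} (R : A -> B -> Prop) (g : A -> B) l :
  (forall a, In a l -> R a (g a)) -> Forall2 R l (map g l).
Proof. induction l; simpl; constructor; auto. Qed.

Section KFP.
Context (n : nat) (X : PreO) (HX : is_po X).
Notation Z := (Tmobj n X).
Notation W := (compose Mdil (Tdil n)).
Notation TL := (tle (lbl (S n)) lblv X).
Notation TT := (teq (lbl (S n)) X).

Local Instance TL_proper' : Proper (TT ==> TT ==> iff) TL := tle_proper _ _ X HX.

Lemma Tm_kfp : kruskal_fp W X Z (iota_n n X) (kappa_n n X).
Proof.
  split; [apply po_Tm; auto|]. split; [|split; [|split; [|split]]].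
  - intros x s E. apply cls_inj in E; [|eqv]. unfold meq in E. simpl in E.
    apply teq_leaf_inv in E. discriminate.
  - intros x y H. rewrite ple_Z, !memb_iota, tle_LL in H. auto.
  - intros. apply fp_iota_kappa; auto.
  - intros s y H. rewrite ple_Z, memb_iota, memb_kappa in H. apply tle_NL in H; auto.
  - intros. apply fp_kappa_kappa; auto.
Qed.

Fixpoint Pf (t : rtree (lbl (S n)) X) : rtree (lbl n) Z :=
  match t with
  | Leaf x => Leaf (cls (meq n X) (MLeaf x))
  | Node i ts => match i with
     | exist _ 0 _ => Leaf (cls (meq n X) (MNode ts))
     | exist _ (S k) p => Node (exist _ k (proj2 (Nat.succ_lt_mono k n) p)) (map Pf ts)
     end
  end.

Lemma rpi_Pf t : TT (rpi (Pf t)) t.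
Proof.
  induction t as [x|[[|k] p] ts IH] using rtree_ind'; simpl.
  - apply (memb_rep_cls n X (MLeaf x)).
  - rewrite (memb_rep_cls n X (MNode ts)). simpl.
    replace (lbl0 n) with (exist (fun i => i < S n) 0 p) by (apply sig_eq; reflexivity).
    reflexivity.
  - match goal with |- teq _ _ (Node ?ii _) _ => replace ii with (exist (fun j => j < S n) (S k) p)
      by (apply sig_eq; reflexivity) end.
    apply teq_node_F2. rewrite map_map. clear - IH. induction IH; simpl; constructor; auto.
Qed.

Lemma Pf_size t z : In z (rsupp (Pf t)) -> rsize (memb (rep z)) <= rsize t.
Proof.
  induction t as [x|[[|k] p] ts IH] using rtree_ind'; simpl.
  - intros [<-|[]]. rewrite (rsize_teq _ _ (memb_rep_cls n X (MLeaf x))). simpl. lia.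
  - intros [<-|[]]. rewrite (rsize_teq _ _ (memb_rep_cls n X (MNode ts))). simpl. lia.
  - intro H. apply in_flat_map in H. destruct H as [u [Hu Hz]]. apply in_map_iff in Hu.
    destruct Hu as [t [<- Ht]]. rewrite Forall_forall in IH. specialize (IH t Ht Hz).
    pose proof (list_sum_in rsize ts t Ht). lia.
Qed.

Lemma decomp (q : Z) : (exists x, q = iota_n n X x) \/
  (exists s, q = kappa_n n X s /\
     forall z, In z (dsupp W s) -> rsize (memb (rep z)) < rsize (memb (rep q))).
Proof.
  rewrite <- (cls_rep (meq n X) q). remember (rep q) as m. clear q Heqm.
  destruct m as [x|ts]; [left; exists x; reflexivity|right].
  set (s := cls (@Permutation (Tobj n Z)) (map (fun t => cls (teq (lbl n) Z) (Pf t)) ts)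
    : dobj W Z).
  assert (Ps : Permutation (map (fun t => cls (teq (lbl n) Z) (Pf t)) ts) (rep s))
    by (apply rep_cls; eqv).
  exists s. split.
  - apply (cls_eq (meq n X)); try (eqv; fail). unfold meq. simpl. unfold Al.
    transitivity (Node (lbl0 n) (map (fun t => rep (pi n X t)) (map (fun t => cls (teq (lbl n) Z) (Pf t)) ts))).
    + apply teq_node_F2. rewrite map_map. apply Forall2_map_r_in. intros t _.
      symmetry. rewrite rep_pi. rewrite <- (rpi_Pf t) at 2. apply rpi_teq.
      apply (rep_cls' (teq _ _)); eqv.
    + apply teq_node_perm. apply Permutation_map; auto.
  - intros z Hz. simpl in Hz. apply in_flat_map in Hz. destruct Hz as [r [Hr Hz]].
    apply (Permutation_in (l := rep s) (l' := map (fun t => cls (teq (lbl n) Z) (Pf t)) ts)) in Hr; [|apply Permutation_sym; auto].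
    apply in_map_iff in Hr. destruct Hr as [t [<- Ht]].
    apply (proj1 (rsupp_teq _ _ (rep_cls' (teq _ _) (fun a => teq_refl a) (@teq_sym _ _) _) z)) in Hz.
    apply Pf_size in Hz. rewrite (rsize_teq _ _ (memb_rep_cls n X (MNode ts))). simpl.
    pose proof (list_sum_in rsize ts t Ht). lia.
Qed.
End KFP.

Section Init.
Context (n : nat) (X : PreO) (HX : is_po X).
Notation Z := (Tmobj n X).
Notation W := (compose Mdil (Tdil n)).
Notation TL := (tle (lbl (S n)) lblv X).
Notation TT := (teq (lbl (S n)) X).
Local Instance TL_proper'' : Proper (TT ==> TT ==> iff) TL := tle_proper _ _ X HX.
Context (Z' : PreO) (i' : X -> Z') (k' : dobj W Z' -> Z') (Hfp : kruskal_fp W X Z' i' k').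

Fixpoint Hf (t : rtree (lbl (S n)) X) : rtree (lbl n) Z' :=
  match t with
  | Leaf x => Leaf (i' x)
  | Node i ts => match i with
     | exist _ 0 _ => Leaf (k' (cls (@Permutation (Tobj n Z'))
                         (map (fun u => cls (teq (lbl n) Z') (Hf u)) ts)))
     | exist _ (S k) p => Node (exist _ k (proj2 (Nat.succ_lt_mono k n) p)) (map Hf ts)
     end
  end.

Definition gm (m : mtree n X) : Z' :=
  match m with
  | MLeaf x => i' x
  | MNode ts => k' (cls (@Permutation (Tobj n Z')) (map (fun u => cls (teq (lbl n) Z') (Hf u)) ts))
  end.

Definition Fm (q : Z) : Z' := gm (rep q).

Lemma Hf_memb m : Hf (memb m) = Leaf (gm m).
Proof. destruct m; reflexivity. Qed.

Lemma Hf_teq a b : TT a b -> teq (lbl n) Z' (Hf a) (Hf b).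
Proof.
  revert b; induction a as [x|i ts IH] using rtree_ind'; intros b H.
  - apply teq_leaf_inv in H; subst; apply teq_refl.
  - apply teq_node_inv in H. destruct H as [ss [us [-> [F P]]]].
    destruct i as [[|k] p]; simpl.
    + match goal with |- teq _ _ (Leaf (k' ?A)) (Leaf (k' ?B)) =>
        assert (E : A = B); [|rewrite E; apply teq_refl] end.
      apply cls_eq; try (eqv; fail).
      transitivity (map (fun u => cls (teq (lbl n) Z') (Hf u)) ss); [|apply Permutation_map; auto].
      replace (map (fun u => cls (teq (lbl n) Z') (Hf u)) ss) with
        (map (fun u => cls (teq (lbl n) Z') (Hf u)) ts); [apply Permutation_refl|].
      clear P. induction F; simpl; auto. inversion IH; subst. f_equal; auto.
      apply cls_eq; try (eqv; fail). auto.
    + apply teq_node with (map Hf ss).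
      * apply Forall2_map_both. eapply Forall2_mono_F; eauto.
      * apply Permutation_map; auto.
Qed.

Lemma gm_meq a b : meq n X a b -> gm a = gm b.
Proof.
  intro H. apply Hf_teq in H. rewrite !Hf_memb in H. apply teq_leaf_inv in H.
  injection H; auto.
Qed.

Lemma Fm_cls m : Fm (cls (meq n X) m) = gm m.
Proof. unfold Fm. symmetry. apply gm_meq. apply (rep_cls (meq n X)); eqv. Qed.

Lemma Hf_rpi a : Hf (rpi a) = rmap Fm a.
Proof.
  induction a as [z|[k p] as_ IH] using rtree_ind'; simpl.
  - apply Hf_memb.
  - rewrite (proof_irrelevance _ (proj2 (Nat.succ_lt_mono k n) (proj1 (Nat.succ_lt_mono k n) p)) p).
    rewrite map_map. apply (f_equal (fun l => Node (exist (fun i => i < n) k p) l)). apply map_ext_in. intros a Ha. rewrite Forall_forall in IH. auto.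
Qed.

Lemma Fm_iota x : Fm (iota_n n X x) = i' x.
Proof. unfold iota_n. rewrite Fm_cls. reflexivity. Qed.

Lemma Fm_kappa s : Fm (kappa_n n X s) = k' (dmap W Fm s).
Proof.
  unfold kappa_n. rewrite Fm_cls. simpl. f_equal. f_equal. rewrite map_map. apply map_ext.
  intro c. apply cls_eq; try (eqv; fail). rewrite <- Hf_rpi. apply Hf_teq. apply rep_pi.
Qed.

Lemma Fm_unique (g : Z -> Z') : (forall x, g (iota_n n X x) = i' x) ->
  (forall s, g (kappa_n n X s) = k' (dmap W g s)) -> forall z, g z = Fm z.
Proof.
  intros Hi Hk z. remember (rsize (memb (rep z))) as N. revert z HeqN.
  induction N as [N IH] using lt_wf_ind. intros z ->.
  destruct (decomp n X z) as [[x ->]|[s [-> Hs]]].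
  - rewrite Hi, Fm_iota. auto.
  - rewrite Hk, Fm_kappa. f_equal. simpl. f_equal. apply map_ext_in. intros c Hc.
    f_equal. apply rmap_ext_in. intros y Hy. eapply IH; [|reflexivity]. apply Hs.
    simpl. apply in_flat_map; eauto.
Qed.

Lemma Fm_qe : quasi_emb Z Z' Fm.
Proof.
  destruct Hfp as [HZ' [Hne [Hii [Hik [Hki Hkk]]]]].
  intros a b. remember (rsize (memb (rep a)) + rsize (memb (rep b))) as N. revert a b HeqN.
  induction N as [N IH] using lt_wf_ind. intros a b -> H.
  destruct (decomp n X a) as [[x ->]|[s [-> Hs]]];
  destruct (decomp n X b) as [[y ->]|[t [-> Ht]]].
  - rewrite !Fm_iota in H. apply Hii in H. rewrite ple_Z, !memb_iota, tle_LL. auto.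
  - rewrite Fm_iota, Fm_kappa in H. apply Hik in H. destruct (H (i' x)) as [z' [Hz' Hl]]; [left; auto|].
    apply supp_dmap_W in Hz'. destruct Hz' as [z [Hz <-]].
    apply fp_iota_kappa; auto. intros w [<-|[]]. exists z. split; auto.
    eapply IH; [|reflexivity|rewrite Fm_iota; exact Hl]. specialize (Ht z Hz). lia.
  - rewrite Fm_iota, Fm_kappa in H. apply Hki in H. contradiction.
  - rewrite !Fm_kappa in H. apply Hkk in H. apply fp_kappa_kappa; auto.
    destruct H as [H|H].
    + left. eapply W_local_reflect; [exact HZ'| |exact H].
      intros z z' Hz Hz' Hzz. eapply IH; [|reflexivity|exact Hzz].
      specialize (Hs z Hz). specialize (Ht z' Hz'). lia.
    + right. destruct (H (k' (dmap W Fm s))) as [z' [Hz' Hl]]; [left; auto|].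
      apply supp_dmap_W in Hz'. destruct Hz' as [z [Hz <-]].
      intros w [<-|[]]. exists z. split; auto.
      eapply IH; [|reflexivity|rewrite Fm_kappa; exact Hl]. specialize (Ht z Hz). lia.
Qed.
End Init.

Lemma Tm_initial n (X : PreO) (HX : is_po X) :
  initial_kfp (compose Mdil (Tdil n)) X (Tmobj n X) (iota_n n X) (kappa_n n X).
Proof.
  split; [apply Tm_kfp; auto|]. intros Z' i' k' Hfp.
  exists (Fm n X Z' i' k'). split; [split; [|split]|].
  - apply Fm_qe; auto.
  - apply Fm_iota.
  - apply Fm_kappa.
  - intros g _ Hi Hk. apply Fm_unique; auto.
Qed.

Lemma iota_nat n (X Y : PreO) (f : X -> Y) x :
  iota_n n Y (f x) = dmap (Tmdil n) f (iota_n n X x).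
Proof.
  simpl. apply cls_eq; try (eqv; fail). unfold meq. rewrite memb_mmap.
  apply teq_sym. apply (rmap_teq f _ (Leaf x)). apply (memb_rep_cls n X (MLeaf x)).
Qed.

Lemma rpi_nat n (X Y : PreO) (f : X -> Y) (a : rtree (lbl n) (Tmobj n X)) :
  teq _ Y (rpi (rmap (dmap (Tmdil n) f) a)) (rmap f (rpi a)).
Proof.
  induction a as [m|i as_ IH] using rtree_ind'; simpl.
  - eapply teq_trans; [apply (memb_rep_cls n Y)|]. rewrite memb_mmap. apply teq_refl.
  - apply teq_node_F2. rewrite !map_map. apply Forall2_map_both.
    apply Forall2_refl_in. rewrite Forall_forall in IH. auto.
Qed.

Lemma kappa_nat n (X Y : PreO) (f : X -> Y) s :
  dmap (Tmdil n) f (kappa_n n X s) =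
  kappa_n n Y (dmap (compose Mdil (Tdil n)) (dmap (Tmdil n) f) s).
Proof.
  simpl dmap at 1. apply cls_eq; try (eqv; fail). unfold meq. rewrite memb_mmap. simpl memb.
  eapply teq_trans; [apply rmap_teq; apply memb_kappa|]. simpl. unfold Al.
  eapply teq_trans; [|apply teq_node_perm; apply Permutation_map; apply (rep_cls (@Permutation _)); eqv].
  apply teq_node_F2. rewrite !map_map. apply Forall2_map_both. apply Forall2_refl_in.
  intros c _. eapply teq_trans; [apply rmap_teq; apply rep_pi|].
  eapply teq_trans; [|apply teq_sym; apply rep_pi].
  eapply teq_trans; [|apply teq_sym; apply rpi_teq; apply (rep_cls' (teq _ _)); eqv].
  apply teq_sym. apply rpi_nat.
Qed.

Theorem theorem6p5 (n : nat) :
  is_normal_dilator (compose Mdil (Tdil n)) /\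
  kruskal_derivative (compose Mdil (Tdil n)) (Tmdil n) (iota_n n) (kappa_n n).
Proof.
  split; [apply W_normal|]. split; [apply Tm_normal|split].
  - intros X HX. apply Tm_initial; auto.
  - intros X Y f HX HY Hf. split; intros; [apply iota_nat|apply kappa_nat].
Qed.
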